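(* Let $s>0$, and let $E\subseteq2^\omega$ be a $\Sigma^1_1$ class with $\mathcal H^s(E)>0$, written as $E=\{x\in2^\omega:\exists g\in\omega^\omega\ \forall n\ R(x\restriction n,g\restriction n)\}$ for a recursive predicate $R$. Then there exists $r\in\omega^\omega$ such that for every $f\in\omega^\omega$ with $f(n)\ge r(n)$ for all $n$, the class $$C_f=\{x\in2^\omega:\exists g\in\omega^\omega\,(\forall n\ g(n)\le f(n))\ \forall n\ R(x\restriction n,g\restriction n)\}$$ is a $\Pi^0_1(f)$ subclass of $E$ with $\mathcal H^s(C_f)>0$.
   Context: Cantor space $2^\omega$ carries the metric $d(x,y)=2^{-\min\{n:x(n)\ne y(n)\}}$ for $x\ne y$; $\mathcal H^s$ denotes $s$-dimensional Hausdorff measure with respect to this metric. $\Pi^0_1(f)$ means effectively closed relative to the oracle $f$. *)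

(* Defs.v *)
From Stdlib Require Import Reals Lra Lia List Arith.
Open Scope R_scope.

Definition cantor := nat -> bool.
Definition baire := nat -> nat.

Definition pre {A : Type} (x : nat -> A) (n : nat) : list A :=
  map x (seq 0 n).

(** * Hausdorff measure on 2^omega with d(x,y) = 2^{-min{n : x n <> y n}} *)

Definition diam_le (U : cantor -> Prop) (t : R) : Prop :=
  forall x y, U x -> U y ->
  forall n : nat, (forall k, (k < n)%nat -> x k = y k) -> x n <> y n ->
  (/ 2) ^ n <= t.

(** [Hs_delta_ge s delta eps E] : H^s_delta(E) >= eps, i.e. every countable
    delta-cover (U_i) of E with (positive) bounds r_i >= diam U_i,
    r_i <= delta, has sum_i r_i^s >= eps (the sum possibly infinite). *)
Definition Hs_delta_ge (s delta eps : R) (E : cantor -> Prop) : Prop :=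
  forall (U : nat -> cantor -> Prop) (r : nat -> R),
    (forall i, 0 < r i <= delta) ->
    (forall i, diam_le (U i) (r i)) ->
    (forall x, E x -> exists i, U i x) ->
    forall a : R, (forall N, sum_f_R0 (fun i => Rpower (r i) s) N <= a) ->
    eps <= a.

(** H^s(E) > 0, where H^s(E) = lim_{delta->0} H^s_delta(E) = sup_delta. *)
Definition Hs_pos (s : R) (E : cantor -> Prop) : Prop :=
  exists delta eps, 0 < delta /\ 0 < eps /\ Hs_delta_ge s delta eps E.

Definition cpair (a b : nat) : nat := ((a + b) * (a + b + 1) / 2 + b)%nat.

Inductive code : Type :=
| CZero | CSucc | CPi1 | CPi2 | COrc
| CComp (c1 c2 : code)
| CPair (c1 c2 : code)
| CRec (c0 c1 : code)
| CMu (c : code).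

Inductive eval (o : nat -> nat) : code -> nat -> nat -> Prop :=
| ev_zero x : eval o CZero x 0
| ev_succ x : eval o CSucc x (S x)
| ev_p1 a b : eval o CPi1 (cpair a b) a
| ev_p2 a b : eval o CPi2 (cpair a b) b
| ev_orc x : eval o COrc x (o x)
| ev_comp c1 c2 x y z : eval o c2 x y -> eval o c1 y z -> eval o (CComp c1 c2) x z
| ev_pair c1 c2 x y z : eval o c1 x y -> eval o c2 x z -> eval o (CPair c1 c2) x (cpair y z)
| ev_rec0 c0 c1 a y : eval o c0 a y -> eval o (CRec c0 c1) (cpair a 0) y
| ev_recS c0 c1 a n y z :
    eval o (CRec c0 c1) (cpair a n) y ->
    eval o c1 (cpair a (cpair n y)) z ->
    eval o (CRec c0 c1) (cpair a (S n)) z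
| ev_mu c a n :
    eval o c (cpair a n) 0 ->
    (forall m, (m < n)%nat -> exists k, eval o c (cpair a m) (S k)) ->
    eval o (CMu c) a n.

Fixpoint code_bl (l : list bool) : nat :=
  match l with nil => 0%nat | b :: l' => S (cpair (if b then 1 else 0) (code_bl l')) end.
Fixpoint code_nl (l : list nat) : nat :=
  match l with nil => 0%nat | m :: l' => S (cpair m (code_nl l')) end.

(** R is a recursive predicate on pairs of strings (no oracle: constant 0). *)
Definition recursive_pred (Rel : list bool -> list nat -> Prop) : Prop :=
  exists e : code, forall sg tau,
    (Rel sg tau -> eval (fun _ => 0%nat) e (cpair (code_bl sg) (code_nl tau)) 0) /\
    (~ Rel sg tau -> eval (fun _ => 0%nat) e (cpair (code_bl sg) (code_nl tau)) 1).

(** C is Pi^0_1(f): its complement is the set of x having an initial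
    segment in an f-c.e. set of strings (W_e^f). *)
Definition Pi01 (f : baire) (C : cantor -> Prop) : Prop :=
  exists e : code, forall x : cantor,
    C x <-> forall n, ~ exists v, eval f e (code_bl (pre x n)) v.

Definition Sig11 (Rel : list bool -> list nat -> Prop) (x : cantor) : Prop :=
  exists g : baire, forall n, Rel (pre x n) (pre g n).

Definition Cf (Rel : list bool -> list nat -> Prop) (f : baire) (x : cantor) : Prop :=
  exists g : baire, (forall n, (g n <= f n)%nat) /\ forall n, Rel (pre x n) (pre g n).

(* Main.v *)
Require Import Defs.
From Stdlib Require Import Reals Lra Lia List Arith Bool.
From Stdlib Require Import ClassicalEpsilon Classical.
Require Import Defs.
Import ListNotations.
Open Scope nat_scope.

Fixpoint Tri (s : nat) : nat := match s with 0 => 0 | S s' => Tri s' + s end.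

Lemma Tri_eq s : s * (s + 1) / 2 = Tri s.
Proof.
  induction s as [|s IH]; [reflexivity|].
  replace (S s * (S s + 1)) with (s * (s+1) + (S s) * 2) by lia.
  rewrite Nat.div_add by lia. simpl Tri. lia.
Qed.

Lemma cpair_T a b : cpair a b = Tri (a + b) + b.
Proof. unfold cpair. rewrite Tri_eq. reflexivity. Qed.

Lemma Tri_mono s s' : s <= s' -> Tri s <= Tri s'.
Proof. induction 1; simpl; lia. Qed.

Lemma Tri_ge s : s <= Tri s.
Proof. induction s; simpl; lia. Qed.

Lemma Tri_lt s s' : s < s' -> Tri s + s < Tri s'.
Proof. intros H. assert (Tri (S s) <= Tri s') by (apply Tri_mono; lia). simpl in H0. lia. Qed.

Lemma cpair_inj a b a' b' : cpair a b = cpair a' b' -> a = a' /\ b = b'.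
Proof.
  rewrite !cpair_T. intros H.
  destruct (lt_eq_lt_dec (a+b) (a'+b')) as [[Hl|He]|Hl].
  - pose proof (Tri_lt _ _ Hl). lia.
  - rewrite He in H. lia.
  - pose proof (Tri_lt _ _ Hl). lia.
Qed.

Lemma cpair_surj x : exists a b, cpair a b = x.
Proof.
  induction x as [|x [a [b IH]]].
  - exists 0, 0. reflexivity.
  - destruct a as [|a].
    + exists (S b), 0. rewrite !cpair_T in *. rewrite Nat.add_0_r. simpl in *. rewrite Nat.add_0_r. lia.
    + exists a, (S b). rewrite !cpair_T in *. replace (a + S b) with (S a + b) by lia. lia.
Qed.

Lemma cpair_ge_r a b : b <= cpair a b.
Proof. rewrite cpair_T. lia. Qed.
Lemma cpair_ge_l a b : a <= cpair a b.
Proof. rewrite cpair_T. pose proof (Tri_ge (a+b)). lia. Qed.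
Lemma cpair_mono a b a' b' : a <= a' -> b <= b' -> cpair a b <= cpair a' b'.
Proof. intros. rewrite !cpair_T. pose proof (Tri_mono (a+b) (a'+b')). lia. Qed.

Definition pfst (x : nat) : nat :=
  proj1_sig (constructive_indefinite_description _ (cpair_surj x)).
Definition psnd (x : nat) : nat :=
  proj1_sig (constructive_indefinite_description _
     (proj2_sig (constructive_indefinite_description _ (cpair_surj x)))).

Lemma cpair_fst_snd x : cpair (pfst x) (psnd x) = x.
Proof.
  unfold pfst, psnd.
  destruct (constructive_indefinite_description _ (cpair_surj x)) as [a Ha]. simpl.
  destruct (constructive_indefinite_description _ Ha) as [b Hb]. simpl. exact Hb.
Qed.

Lemma pfst_cpair a b : pfst (cpair a b) = a.
Proof. pose proof (cpair_fst_snd (cpair a b)). apply cpair_inj in H. tauto. Qed.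
Lemma psnd_cpair a b : psnd (cpair a b) = b.
Proof. pose proof (cpair_fst_snd (cpair a b)). apply cpair_inj in H. tauto. Qed.

Definition comp (o : nat -> nat) (F : nat -> nat) : Prop :=
  exists c, forall x, eval o c x (F x).

Lemma comp_ext o F G : (forall x, F x = G x) -> comp o G -> comp o F.
Proof. intros H [c Hc]. exists c. intros x. rewrite H. apply Hc. Qed.

Lemma eval_p1' o y : eval o CPi1 y (pfst y).
Proof. pose proof (ev_p1 o (pfst y) (psnd y)) as H. rewrite cpair_fst_snd in H. exact H. Qed.
Lemma eval_p2' o y : eval o CPi2 y (psnd y).
Proof. pose proof (ev_p2 o (pfst y) (psnd y)) as H. rewrite cpair_fst_snd in H. exact H. Qed.

Lemma comp_id o : comp o (fun x => x).
Proof.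
  exists (CPair CPi1 CPi2). intros x.
  pose proof (ev_pair o CPi1 CPi2 x (pfst x) (psnd x) (eval_p1' o x) (eval_p2' o x)) as H.
  rewrite cpair_fst_snd in H. exact H.
Qed.

Lemma comp_compose o F G : comp o F -> comp o G -> comp o (fun x => F (G x)).
Proof. intros [c1 H1] [c2 H2]. exists (CComp c1 c2). intros x. econstructor; eauto. Qed.

Lemma comp_S o F : comp o F -> comp o (fun x => S (F x)).
Proof. intros [c H]. exists (CComp CSucc c). intros x. econstructor; eauto. constructor. Qed.

Lemma comp_fst o F : comp o F -> comp o (fun x => pfst (F x)).
Proof. intros [c H]. exists (CComp CPi1 c). intros x. econstructor; eauto. apply eval_p1'. Qed.
Lemma comp_snd o F : comp o F -> comp o (fun x => psnd (F x)).
Proof. intros [c H]. exists (CComp CPi2 c). intros x. econstructor; eauto. apply eval_p2'. Qed.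
Lemma comp_orc o F : comp o F -> comp o (fun x => o (F x)).
Proof. intros [c H]. exists (CComp COrc c). intros x. econstructor; eauto. constructor. Qed.
Lemma comp_pair o F G : comp o F -> comp o G -> comp o (fun x => cpair (F x) (G x)).
Proof. intros [c1 H1] [c2 H2]. exists (CPair c1 c2). intros x. constructor; auto. Qed.

Lemma comp_const o k : comp o (fun _ => k).
Proof.
  induction k.
  - exists CZero. intros. constructor.
  - apply (comp_S o (fun _ => k)). exact IHk.
Qed.

Fixpoint prec (h0 : nat -> nat) (h1 : nat -> nat -> nat -> nat) (a n : nat) : nat :=
  match n with 0 => h0 a | S n => h1 a n (prec h0 h1 a n) end.

Lemma comp_prec o h0 h1 A N :
  comp o h0 -> comp o (fun z => h1 (pfst z) (pfst (psnd z)) (psnd (psnd z))) ->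
  comp o A -> comp o N -> comp o (fun x => prec h0 h1 (A x) (N x)).
Proof.
  intros [c0 H0] [c1 H1] HA HN.
  assert (Hr : comp o (fun x => prec h0 h1 (pfst x) (psnd x))).
  { exists (CRec c0 c1). intros x. rewrite <- (cpair_fst_snd x) at 1.
    generalize (pfst x) (psnd x). intros a n. induction n as [|n IH].
    - simpl. constructor. apply H0.
    - simpl. eapply ev_recS. apply IH.
      pose proof (H1 (cpair a (cpair n (prec h0 h1 a n)))) as E.
      rewrite !pfst_cpair, !psnd_cpair, !pfst_cpair in E. exact E. }
  pose proof (comp_compose o _ _ Hr (comp_pair o A N HA HN)) as H.
  eapply comp_ext; [|exact H]. intros x. cbv beta. rewrite pfst_cpair, psnd_cpair. reflexivity.
Qed.

Definition ifz (z a b : nat) : nat := match z with 0 => a | S _ => b end.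

Lemma comp_ifz o Z A B : comp o Z -> comp o A -> comp o B -> comp o (fun x => ifz (Z x) (A x) (B x)).
Proof.
  intros HZ HA HB.
  apply comp_ext with (G := fun x => prec (fun a => pfst a) (fun a _ _ => psnd a) (cpair (A x) (B x)) (Z x)).
  { intros x. destruct (Z x); simpl; rewrite ?pfst_cpair, ?psnd_cpair; reflexivity. }
  apply comp_prec.
  - apply comp_fst, comp_id.
  - apply comp_snd, comp_fst, comp_id.
  - apply comp_pair; auto.
  - auto.
Qed.

Lemma comp_pred o F : comp o F -> comp o (fun x => pred (F x)).
Proof.
  intros HF.
  apply comp_ext with (G := fun x => prec (fun _ => 0) (fun _ n _ => n) 0 (F x)).
  { intros x. destruct (F x); reflexivity. }
  apply comp_prec; auto using comp_const.
  apply comp_fst, comp_snd, comp_id.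
Qed.

Lemma comp_add o F G : comp o F -> comp o G -> comp o (fun x => F x + G x).
Proof.
  intros HF HG.
  apply comp_ext with (G := fun x => prec (fun a => a) (fun _ _ y => S y) (F x) (G x)).
  { intros x. generalize (G x). induction n; simpl; lia. }
  apply comp_prec; auto using comp_id.
  apply comp_S, comp_snd, comp_snd, comp_id.
Qed.

Lemma comp_sub o F G : comp o F -> comp o G -> comp o (fun x => F x - G x).
Proof.
  intros HF HG.
  apply comp_ext with (G := fun x => prec (fun a => a) (fun _ _ y => pred y) (F x) (G x)).
  { intros x. generalize (G x). induction n; simpl; lia. }
  apply comp_prec; auto using comp_id.
  apply comp_pred, comp_snd, comp_snd, comp_id.
Qed.

Ltac cstep :=
  match goal with
  | |- comp _ (fun _ => ?c) => apply comp_const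
  | |- comp _ (fun x => x) => apply comp_id
  | |- comp _ (fun x => S (@?F x)) => apply (comp_S _ F)
  | |- comp _ (fun x => pred (@?F x)) => apply (comp_pred _ F)
  | |- comp _ (fun x => pfst (@?F x)) => apply (comp_fst _ F)
  | |- comp _ (fun x => psnd (@?F x)) => apply (comp_snd _ F)
  | |- comp _ (fun x => cpair (@?F x) (@?G x)) => apply (comp_pair _ F G)
  | |- comp _ (fun x => (@?F x) + (@?G x)) => apply (comp_add _ F G)
  | |- comp _ (fun x => (@?F x) - (@?G x)) => apply (comp_sub _ F G)
  | |- comp _ (fun x => ifz (@?Z x) (@?A x) (@?B x)) => apply (comp_ifz _ Z A B)
  | |- comp _ (fun x => prec ?h0 ?h1 (@?A x) (@?N x)) => apply (comp_prec _ h0 h1 A N)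
  | |- comp ?o (fun x => ?o (@?F x)) => apply (comp_orc o F)
  end; cbv beta.

Ltac crush := repeat cstep.

Lemma test o : comp o (fun x => prec (fun a => a + 1) (fun a n y => ifz y (o n) (a - n)) (pfst x) (o (psnd x))).
Proof. crush. Qed.

Ltac cpinj := repeat match goal with H : cpair _ _ = cpair _ _ |- _ => apply cpair_inj in H; destruct H; subst end.

Lemma eval_det o c : forall x y y', eval o c x y -> eval o c x y' -> y = y'.
Proof.
  induction c; intros x y y' H1 H2.
  - inversion H1; inversion H2; subst; auto.
  - inversion H1; inversion H2; subst; auto.
  - inversion H1; subst. inversion H2; subst. cpinj. auto.
  - inversion H1; subst. inversion H2; subst. cpinj. auto.
  - inversion H1; inversion H2; subst; auto.
  - inversion H1; subst. inversion H2; subst.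
    assert (y0 = y1) by eauto. subst. eauto.
  - inversion H1; subst. inversion H2; subst.
    f_equal; eauto.
  - revert y' H2. remember (CRec c1 c2) as cc. induction H1; try discriminate; inversion Heqcc; subst; intros y' H2.
    + inversion H2; subst; cpinj; try discriminate. eauto.
    + inversion H2; subst; cpinj; try discriminate.
      match goal with Hn : S _ = S _ |- _ => injection Hn as -> end.
      match goal with Hy : eval _ (CRec _ _) _ ?y1 |- _ => assert (y = y1) by (apply IHeval1; auto) end. subst. eauto.
  - inversion H1; subst. inversion H2; subst.
    destruct (lt_eq_lt_dec y y') as [[Hl|He]|Hl]; auto.
    + match goal with Hf : forall m, m < y' -> _ |- _ => destruct (Hf y Hl) as [k Hk] end.
      match goal with H0 : eval o c (cpair x y) 0 |- _ => specialize (IHc _ _ _ H0 Hk) end. discriminate.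
    + match goal with Hf : forall m, m < y -> _ |- _ => destruct (Hf y' Hl) as [k Hk] end.
      match goal with H0 : eval o c (cpair x y') 0 |- _ => specialize (IHc _ _ _ H0 Hk) end. discriminate.
Qed.

Fixpoint noorc (c : code) : code :=
  match c with
  | COrc => CZero
  | CComp a b => CComp (noorc a) (noorc b)
  | CPair a b => CPair (noorc a) (noorc b)
  | CRec a b => CRec (noorc a) (noorc b)
  | CMu a => CMu (noorc a)
  | c => c
  end.

Lemma eval_noorc o c : forall x y, eval (fun _ => 0) c x y -> eval o (noorc c) x y.
Proof.
  induction c; intros x y H; simpl.
  - inversion H; subst; constructor.
  - inversion H; subst; constructor.
  - inversion H; subst; constructor.
  - inversion H; subst; constructor.
  - inversion H; subst; constructor.
  - inversion H; subst. econstructor; eauto.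
  - inversion H; subst. econstructor; eauto.
  - remember (CRec c1 c2) as cc. induction H; try discriminate; inversion Heqcc; subst.
    + constructor. auto.
    + eapply ev_recS; eauto.
  - inversion H; subst. constructor; auto.
    intros m Hm. match goal with Hf : forall m, m < _ -> _ |- _ => destruct (Hf m Hm) as [k Hk] end. exists k. auto.
Qed.

Definition b2n (b : bool) : nat := if b then 1 else 0.
Lemma code_bl_nl l : code_bl l = code_nl (map b2n l).
Proof. induction l; simpl; auto. Qed.

Lemma code_nl_len l : length l <= code_nl l.
Proof. induction l; simpl; auto. pose proof (cpair_ge_r a (code_nl l)). lia. Qed.

Lemma code_nl_surj n : exists l, code_nl l = n.
Proof.
  induction n as [n IH] using lt_wf_ind.
  destruct n as [|n]. exists []. reflexivity.
  destruct (cpair_surj n) as [a [b Hab]].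
  destruct (IH b) as [l Hl]. { pose proof (cpair_ge_r a b). lia. }
  exists (a :: l). simpl. rewrite Hl, Hab. reflexivity.
Qed.

Lemma code_nl_inj l l' : code_nl l = code_nl l' -> l = l'.
Proof.
  revert l'; induction l; destruct l'; simpl; intros H; try discriminate; auto.
  injection H as H. apply cpair_inj in H. destruct H. subst. f_equal. auto.
Qed.

Lemma code_nl_zero l : code_nl l = 0 <-> l = [].
Proof. destruct l; simpl; split; intros; congruence. Qed.

Definition tlc X := ifz X 0 (psnd (pred X)).
Definition hdc X := pfst (pred X).
Definition itc k X := prec (fun a => a) (fun _ _ y => tlc y) X k.
Definition lenc X := prec (fun _ => 0) (fun a n y => y + ifz (itc n a) 0 1) X X.
Definition nthc k X := hdc (itc k X).
Definition rtc k X := prec (fun _ => 0) (fun a n y => S (cpair (nthc n a) y)) X k.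
Definition rtb k X := prec (fun _ => 0) (fun a n y => S (cpair (ifz (nthc n a) 0 1) y)) X k.
Definition revc Y := psnd (prec (fun a => cpair a 0)
   (fun _ _ p => cpair (tlc (pfst p)) (S (cpair (hdc (pfst p)) (psnd p)))) Y (lenc Y)).
Definition takec k X := revc (rtc k X).
Definition takeb k X := revc (rtb k X).

Ltac cext := fail.
Ltac cstep1 := first [ cstep | cext | assumption ].
Ltac crush1 := repeat cstep1.

Lemma comp_tlc o F : comp o F -> comp o (fun x => tlc (F x)).
Proof. intros. unfold tlc. crush1. Qed.
Ltac cext ::= match goal with
  | |- comp _ (fun x => tlc (@?F x)) => apply (comp_tlc _ F) end; cbv beta.
Lemma comp_hdc o F : comp o F -> comp o (fun x => hdc (F x)).
Proof. intros. unfold hdc. crush1. Qed.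
Ltac cext ::= match goal with
  | |- comp _ (fun x => tlc (@?F x)) => apply (comp_tlc _ F)
  | |- comp _ (fun x => hdc (@?F x)) => apply (comp_hdc _ F) end; cbv beta.
Lemma comp_itc o F G : comp o F -> comp o G -> comp o (fun x => itc (F x) (G x)).
Proof. intros. unfold itc. crush1. Qed.
Ltac cext ::= match goal with
  | |- comp _ (fun x => tlc (@?F x)) => apply (comp_tlc _ F)
  | |- comp _ (fun x => hdc (@?F x)) => apply (comp_hdc _ F)
  | |- comp _ (fun x => itc (@?F x) (@?G x)) => apply (comp_itc _ F G) end; cbv beta.
Lemma comp_lenc o F : comp o F -> comp o (fun x => lenc (F x)).
Proof. intros. unfold lenc. crush1. Qed.
Lemma comp_nthc o F G : comp o F -> comp o G -> comp o (fun x => nthc (F x) (G x)).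
Proof. intros. unfold nthc. crush1. Qed.
Ltac cext ::= match goal with
  | |- comp _ (fun x => tlc (@?F x)) => apply (comp_tlc _ F)
  | |- comp _ (fun x => hdc (@?F x)) => apply (comp_hdc _ F)
  | |- comp _ (fun x => itc (@?F x) (@?G x)) => apply (comp_itc _ F G)
  | |- comp _ (fun x => lenc (@?F x)) => apply (comp_lenc _ F)
  | |- comp _ (fun x => nthc (@?F x) (@?G x)) => apply (comp_nthc _ F G) end; cbv beta.
Lemma comp_rtc o F G : comp o F -> comp o G -> comp o (fun x => rtc (F x) (G x)).
Proof. intros. unfold rtc. crush1. Qed.
Lemma comp_rtb o F G : comp o F -> comp o G -> comp o (fun x => rtb (F x) (G x)).
Proof. intros. unfold rtb. crush1. Qed.
Lemma comp_revc o F : comp o F -> comp o (fun x => revc (F x)).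
Proof. intros. unfold revc. crush1. Qed.
Lemma comp_takec o F G : comp o F -> comp o G -> comp o (fun x => takec (F x) (G x)).
Proof. intros. unfold takec. apply comp_revc, comp_rtc; auto. Qed.
Lemma comp_takeb o F G : comp o F -> comp o G -> comp o (fun x => takeb (F x) (G x)).
Proof. intros. unfold takeb. apply comp_revc, comp_rtb; auto. Qed.
Ltac cext ::= match goal with
  | |- comp _ (fun x => tlc (@?F x)) => apply (comp_tlc _ F)
  | |- comp _ (fun x => hdc (@?F x)) => apply (comp_hdc _ F)
  | |- comp _ (fun x => itc (@?F x) (@?G x)) => apply (comp_itc _ F G)
  | |- comp _ (fun x => lenc (@?F x)) => apply (comp_lenc _ F)
  | |- comp _ (fun x => nthc (@?F x) (@?G x)) => apply (comp_nthc _ F G)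
  | |- comp _ (fun x => takec (@?F x) (@?G x)) => apply (comp_takec _ F G)
  | |- comp _ (fun x => takeb (@?F x) (@?G x)) => apply (comp_takeb _ F G) end; cbv beta.

Lemma pfst0 : pfst 0 = 0.
Proof. change 0 with (cpair 0 0) at 1. apply pfst_cpair. Qed.

Lemma tlc_code l : tlc (code_nl l) = code_nl (tl l).
Proof. destruct l; simpl; auto. unfold tlc. simpl. rewrite psnd_cpair. reflexivity. Qed.
Lemma hdc_code a l : hdc (code_nl (a :: l)) = a.
Proof. unfold hdc. simpl. apply pfst_cpair. Qed.
Lemma hdc_nil : hdc (code_nl []) = 0.
Proof. unfold hdc. simpl. apply pfst0. Qed.

Lemma tl_skipn {A} k (l : list A) : tl (skipn k l) = skipn (S k) l.
Proof. revert l; induction k; intros l; destruct l; simpl; auto. Qed.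

Lemma itc_code k l : itc k (code_nl l) = code_nl (skipn k l).
Proof.
  induction k; simpl; auto. unfold itc in *. simpl. rewrite IHk, tlc_code, tl_skipn. reflexivity.
Qed.

Lemma skipn_nil_iff {A} k (l : list A) : skipn k l = [] <-> length l <= k.
Proof.
  revert l; induction k; intros l; destruct l; simpl; split; intros; try lia; try discriminate; auto.
  - apply IHk in H. lia.
  - apply IHk. lia.
Qed.

Lemma lenc_code l : lenc (code_nl l) = length l.
Proof.
  unfold lenc.
  assert (forall N, prec (fun _ => 0) (fun a n y => y + ifz (itc n a) 0 1) (code_nl l) N = min N (length l)).
  { induction N. reflexivity. cbn [prec]. rewrite IHN, itc_code.
    destruct (code_nl (skipn N l)) eqn:E; cbn [ifz].
    - apply code_nl_zero, skipn_nil_iff in E. lia.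
    - assert (skipn N l <> []) by (intro Hc; rewrite Hc in E; discriminate).
      rewrite skipn_nil_iff in H. lia. }
  rewrite H. pose proof (code_nl_len l). lia.
Qed.

Lemma skipn_nth k (l : list nat) : k < length l -> skipn k l = nth k l 0 :: skipn (S k) l.
Proof. revert l; induction k; intros l H; destruct l; simpl in *; try lia; auto. apply IHk. lia. Qed.

Lemma nthc_code k l : nthc k (code_nl l) = nth k l 0.
Proof.
  unfold nthc. rewrite itc_code. destruct (Nat.lt_ge_cases k (length l)).
  - rewrite skipn_nth by auto. apply hdc_code.
  - rewrite (proj2 (skipn_nil_iff k l) H), nth_overflow by auto. apply hdc_nil.
Qed.

Lemma firstn_S_nthg {A} (d : A) k (l : list A) : k < length l -> firstn (S k) l = firstn k l ++ [nth k l d].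
Proof. revert l; induction k; intros l H; destruct l; simpl in *; try lia; auto. rewrite IHk by lia. reflexivity. Qed.
Lemma firstn_S_nth k (l : list nat) : k < length l -> firstn (S k) l = firstn k l ++ [nth k l 0].
Proof. revert l; induction k; intros l H; destruct l; simpl in *; try lia; auto. rewrite IHk by lia. reflexivity. Qed.

Lemma rtc_code k l : k <= length l -> rtc k (code_nl l) = code_nl (rev (firstn k l)).
Proof.
  induction k; intros H. reflexivity.
  unfold rtc in *; cbn [prec]. rewrite IHk by lia. rewrite firstn_S_nth by lia.
  rewrite rev_app_distr. cbn [rev app code_nl]. rewrite nthc_code. reflexivity.
Qed.

Lemma revc_code l : revc (code_nl l) = code_nl (rev l).
Proof.
  unfold revc. rewrite lenc_code.
  assert (forall j, j <= length l -> prec (fun a => cpair a 0)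
   (fun _ _ p => cpair (tlc (pfst p)) (S (cpair (hdc (pfst p)) (psnd p)))) (code_nl l) j
   = cpair (code_nl (skipn j l)) (code_nl (rev (firstn j l)))).
  { induction j; intros Hj. reflexivity. cbn [prec].
    rewrite IHj by lia. rewrite pfst_cpair, psnd_cpair, tlc_code.
    rewrite (skipn_nth j l) by lia. rewrite hdc_code. cbn [code_nl tl].
    rewrite firstn_S_nth by lia. rewrite rev_app_distr. reflexivity. }
  rewrite H by lia. rewrite psnd_cpair, firstn_all. reflexivity.
Qed.

Lemma takec_code k l : k <= length l -> takec k (code_nl l) = code_nl (firstn k l).
Proof. intros. unfold takec. rewrite rtc_code, revc_code, rev_involutive by auto. reflexivity. Qed.

Lemma ifz_b2n b : ifz (b2n b) 0 1 = b2n b.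
Proof. destruct b; reflexivity. Qed.

Lemma rtb_code k l : k <= length l -> rtb k (code_nl (map b2n l)) = code_nl (map b2n (rev (firstn k l))).
Proof.
  induction k; intros H. reflexivity.
  unfold rtb in *; cbn [prec]. rewrite IHk by lia.
  rewrite nthc_code. change 0 with (b2n false). rewrite map_nth, ifz_b2n.
  rewrite (firstn_S_nthg false) by lia. rewrite rev_app_distr. reflexivity.
Qed.

Lemma takeb_code k l : k <= length l -> takeb k (code_bl l) = code_bl (firstn k l).
Proof.
  intros H. unfold takeb. rewrite !code_bl_nl, rtb_code, revc_code by auto.
  rewrite <- map_rev, rev_involutive. reflexivity.
Qed.

Lemma rtb_valid k X : exists sg, rtb k X = code_nl (map b2n sg).
Proof.
  induction k. exists []. reflexivity.
  destruct IHk as [sg Hsg]. unfold rtb in *. cbn [prec]. rewrite Hsg.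
  exists ((match nthc k X with 0 => false | _ => true end) :: sg).
  cbn [map code_nl]. f_equal. f_equal. destruct (nthc k X); reflexivity.
Qed.

Lemma takeb_valid k X : exists sg, takeb k X = code_bl sg.
Proof.
  destruct (rtb_valid k X) as [sg H]. exists (rev sg). unfold takeb.
  rewrite H, revc_code, code_bl_nl, map_rev. reflexivity.
Qed.

Definition Rval (Rel : list bool -> list nat -> Prop) (w : nat) : nat :=
  if excluded_middle_informative (exists sg tau, w = cpair (code_bl sg) (code_nl tau) /\ Rel sg tau)
  then 0 else 1.

Lemma map_b2n_inj l l' : map b2n l = map b2n l' -> l = l'.
Proof.
  revert l'; induction l; destruct l'; simpl; intros H; try discriminate; auto.
  injection H as H1 H2. f_equal; auto. destruct a, b; simpl in *; congruence.
Qed.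

Lemma code_bl_inj l l' : code_bl l = code_bl l' -> l = l'.
Proof. rewrite !code_bl_nl. intros H. apply code_nl_inj in H. apply map_b2n_inj, H. Qed.

Lemma comp_Rval o Rel G : recursive_pred Rel -> comp o G ->
  (forall x, exists sg tau, G x = cpair (code_bl sg) (code_nl tau)) ->
  comp o (fun x => Rval Rel (G x)).
Proof.
  intros [e He] [c Hc] HG. exists (CComp (noorc e) c). intros x.
  destruct (HG x) as [sg [tau Hx]].
  econstructor. apply Hc. apply eval_noorc. rewrite Hx. unfold Rval.
  destruct (excluded_middle_informative _) as [[sg' [tau' [E HR]]]|Hn].
  - apply cpair_inj in E. destruct E as [E1 E2].
    apply code_bl_inj in E1. apply code_nl_inj in E2. subst. apply He. exact HR.
  - apply He. intros HR. apply Hn. exists sg, tau. auto.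
Qed.

Lemma sum_prec_zero g X N :
  prec (fun _ => 0) (fun a c y => y + g a c) X N = 0 <-> forall c, c < N -> g X c = 0.
Proof.
  induction N; cbn [prec]; split; intros H.
  - intros; lia.
  - reflexivity.
  - intros c Hc. assert (Hy := H). apply Nat.eq_add_0 in Hy. destruct Hy as [H1 H2].
    destruct (Nat.eq_dec c N). subst; auto. apply IHN; auto. lia.
  - rewrite (proj2 IHN) by (intros; apply H; lia). rewrite H by lia. reflexivity.
Qed.


Definition Mb (f : nat -> nat) X := prec (fun _ => 0) (fun a i y => y + f i) X (lenc X).
Definition NB f X := prec (fun _ => 0) (fun a i y => S (cpair (Mb f a) y)) X (lenc X).
Definition bad1 X c := (lenc c - lenc X) + (lenc X - lenc c).
Definition bad2 (f : nat -> nat) X c := prec (fun _ => 0) (fun a i y => y + (nthc i (psnd a) - f i)) (cpair X c) (lenc X).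
Definition bad3 Rel X c := prec (fun _ => 0)
   (fun a k y => y + Rval Rel (cpair (takeb k (pfst a)) (takec k (psnd a)))) (cpair X c) (S (lenc X)).
Definition okv Rel f X c := ifz (bad1 X c + bad2 f X c + bad3 Rel X c) 1 0.
Definition count Rel f X := prec (fun _ => 0) (fun a c y => y + okv Rel f a c) X (S (NB f X)).

Lemma comp_count Rel f : recursive_pred Rel -> comp f (fun w => count Rel f (pfst w)).
Proof.
  intros HR. unfold count, okv, bad1, bad2, bad3, NB, Mb. crush1.
  apply (comp_Rval f Rel (fun z => cpair (takeb (pfst (psnd z)) (pfst (pfst z))) (takec (pfst (psnd z)) (psnd (pfst z))))); auto.
  - crush1.
  - intros x. destruct (takeb_valid (pfst (psnd x)) (pfst (pfst x))) as [sg Hs].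
    destruct (code_nl_surj (takec (pfst (psnd x)) (psnd (pfst x)))) as [tau Ht].
    exists sg, tau. rewrite Hs, Ht. reflexivity.
Qed.

Definition good Rel (f : nat -> nat) (sg : list bool) (tau : list nat) : Prop :=
  length tau = length sg /\ (forall i, i < length sg -> nth i tau 0 <= f i) /\
  (forall k, k <= length sg -> Rel (firstn k sg) (firstn k tau)).

Lemma Rval_code Rel a b : Rval Rel (cpair (code_bl a) (code_nl b)) = 0 <-> Rel a b.
Proof.
  unfold Rval. destruct (excluded_middle_informative _) as [[sg' [tau' [E HR]]]|Hn].
  - apply cpair_inj in E. destruct E as [E1 E2].
    apply code_bl_inj in E1. apply code_nl_inj in E2. subst. tauto.
  - split; intros H; [discriminate|]. exfalso. apply Hn. eauto.
Qed.

Lemma lenc_bl sg : lenc (code_bl sg) = length sg.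
Proof. rewrite code_bl_nl, lenc_code, length_map. reflexivity. Qed.

Lemma okv_spec Rel f sg tau :
  okv Rel f (code_bl sg) (code_nl tau) = 0 <-> ~ good Rel f sg tau.
Proof.
  unfold okv, good.
  assert (E : bad1 (code_bl sg) (code_nl tau) + bad2 f (code_bl sg) (code_nl tau)
            + bad3 Rel (code_bl sg) (code_nl tau) = 0 <->
          length tau = length sg /\ (forall i, i < length sg -> nth i tau 0 <= f i) /\
          (forall k, k <= length sg -> Rel (firstn k sg) (firstn k tau))).
  { unfold bad1, bad2, bad3. rewrite lenc_bl, lenc_code.
    rewrite !Nat.eq_add_0.
    rewrite (sum_prec_zero (fun a i => nthc i (psnd a) - f i)).
    rewrite (sum_prec_zero (fun a k => Rval Rel (cpair (takeb k (pfst a)) (takec k (psnd a))))).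
    rewrite !pfst_cpair, !psnd_cpair.
    split.
    - intros [[[H1 H1'] H2] H3]. assert (HL : length tau = length sg) by lia.
      split; [exact HL|split].
      + intros i Hi. specialize (H2 i Hi). rewrite nthc_code in H2. lia.
      + intros k Hk. specialize (H3 k ltac:(lia)).
        rewrite takeb_code, takec_code in H3 by lia. apply Rval_code in H3. exact H3.
    - intros [HL [H2 H3]]. split; [split; [split|]|].
      + lia.
      + lia.
      + intros i Hi. rewrite nthc_code. specialize (H2 i Hi). lia.
      + intros k Hk. rewrite takeb_code, takec_code by lia. apply Rval_code. apply H3. lia. }
  destruct (bad1 _ _ + _ + _) eqn:Hs; cbn [ifz].
  - split; intros H; [discriminate|]. exfalso. apply H. apply E. reflexivity.
  - split; intros _; auto. intros Hg. apply E in Hg. discriminate.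
Qed.

Lemma sum_prec_ge g X N c : c < N -> g X c <= prec (fun _ => 0) (fun a c y => y + g a c) X N.
Proof. induction N; intros H; cbn [prec]. lia. destruct (Nat.eq_dec c N). subst. lia. specialize (IHN ltac:(lia)). lia. Qed.

Lemma NB_bound f X tau : length tau <= lenc X -> (forall a, In a tau -> a <= Mb f X) ->
  code_nl tau <= NB f X.
Proof.
  unfold NB. generalize (lenc X). intros N. revert N.
  induction tau as [|a tau IH]; intros N HN Ha; cbn [code_nl]. lia.
  destruct N as [|N]. simpl in HN. lia. cbn [prec].
  apply le_n_S. apply cpair_mono. apply Ha; left; auto.
  apply IH. simpl in HN. lia. intros b Hb. apply Ha. right. auto.
Qed.

Lemma count_spec Rel f sg : count Rel f (code_bl sg) = 0 <-> ~ exists tau, good Rel f sg tau.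
Proof.
  unfold count. rewrite (sum_prec_zero (okv Rel f)). split.
  - intros H [tau Hg].
    assert (Hc : code_nl tau <= NB f (code_bl sg)).
    { destruct Hg as [HL [H2 _]]. apply NB_bound. rewrite lenc_bl. lia.
      intros a Ha. apply In_nth with (d := 0) in Ha. destruct Ha as [i [Hi <-]].
      eapply Nat.le_trans. apply H2. lia. unfold Mb. rewrite lenc_bl.
      apply (sum_prec_ge (fun _ i => f i)). lia. }
    specialize (H (code_nl tau) ltac:(lia)). apply okv_spec in H. auto.
  - intros Hn c _. destruct (code_nl_surj c) as [tau <-]. apply okv_spec. intros Hg. apply Hn. eauto.
Qed.

Lemma Pi01_good Rel f : recursive_pred Rel ->
  Pi01 f (fun x => forall n, exists tau, good Rel f (pre x n) tau).
Proof.
  intros HR. destruct (comp_count Rel f HR) as [cc Hcc].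
  exists (CMu cc). intros x. split.
  - intros H n [v Hv]. inversion Hv; subst.
    pose proof (eval_det _ _ _ _ _ H1 (Hcc _)). rewrite pfst_cpair in H0.
    symmetry in H0. apply count_spec in H0. apply H0. apply H.
  - intros H n. apply NNPP. intros Hn. apply (H n). exists 0.
    constructor.
    + pose proof (Hcc (cpair (code_bl (pre x n)) 0)) as E. rewrite pfst_cpair in E.
      assert (Z : count Rel f (code_bl (pre x n)) = 0) by (apply count_spec; auto).
      rewrite Z in E. exact E.
    + intros m Hm. lia.
Qed.

Lemma length_pre {A} (x : nat -> A) n : length (pre x n) = n.
Proof. unfold pre. rewrite length_map, length_seq. reflexivity. Qed.

Lemma pre_S {A} (x : nat -> A) n : pre x (S n) = pre x n ++ [x n].
Proof. unfold pre. rewrite seq_S, map_app. reflexivity. Qed.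

Lemma nth_pre {A} (x : nat -> A) n i d : i < n -> nth i (pre x n) d = x i.
Proof.
  intros H. unfold pre. rewrite nth_indep with (d' := x 0) by (rewrite length_map, length_seq; lia).
  rewrite map_nth, seq_nth by lia. reflexivity.
Qed.

Lemma pre_ext {A} (x y : nat -> A) n : (forall i, i < n -> x i = y i) -> pre x n = pre y n.
Proof. intros H. unfold pre. apply map_ext_in. intros a Ha. apply in_seq in Ha. apply H. lia. Qed.

Lemma pre_eq_inv {A} (x y : nat -> A) n : pre x n = pre y n -> forall i, i < n -> x i = y i.
Proof.
  intros H i Hi. rewrite <- (nth_pre x n i (x 0) Hi), <- (nth_pre y n i (x 0) Hi), H. reflexivity.
Qed.

Lemma firstn_pre {A} (x : nat -> A) n k : k <= n -> firstn k (pre x n) = pre x k.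
Proof.
  intros H. apply nth_ext with (d := x 0) (d' := x 0).
  - rewrite length_firstn, !length_pre. lia.
  - intros i Hi. rewrite length_firstn, length_pre in Hi.
    rewrite nth_firstn. destruct (i <? k) eqn:E; [|apply Nat.ltb_ge in E; lia].
    rewrite !nth_pre by lia. reflexivity.
Qed.

Lemma pre_nth_list (tau : list nat) k : k <= length tau -> pre (fun i => nth i tau 0) k = firstn k tau.
Proof.
  intros H. apply nth_ext with (d := 0) (d' := 0).
  - rewrite length_firstn, !length_pre. lia.
  - intros i Hi. rewrite length_pre in Hi. rewrite nth_pre by lia.
    rewrite nth_firstn. destruct (i <? k) eqn:E; [reflexivity|apply Nat.ltb_ge in E; lia].
Qed.

Definition infl (z : nat -> nat -> nat) (l : list nat) : Prop :=
  forall N, exists n, N <= n /\ pre (z n) (length l) = l.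

Lemma finite_max (P : nat -> nat -> Prop) K :
  (forall v N N', N <= N' -> P v N -> P v N') ->
  (forall v, v <= K -> exists N, P v N) -> exists N, forall v, v <= K -> P v N.
Proof.
  intros Hm H. induction K.
  - destruct (H 0 (le_n 0)) as [N HN]. exists N. intros v Hv. replace v with 0 by lia. auto.
  - destruct IHK as [N1 H1]. intros; apply H; lia.
    destruct (H (S K) (le_n _)) as [N2 H2]. exists (N1 + N2). intros v Hv.
    destruct (Nat.eq_dec v (S K)). subst. apply Hm with N2; auto; lia.
    apply Hm with N1; [lia|]. apply H1. lia.
Qed.

Lemma infl_step z B l : (forall n i, z n i <= B i) -> infl z l ->
  exists v, v <= B (length l) /\ infl z (l ++ [v]).
Proof.
  intros HB Hl. apply NNPP. intros Hn.
  assert (H : forall v, v <= B (length l) -> exists N, forall n, N <= n -> pre (z n) (length (l ++ [v])) <> l ++ [v]).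
  { intros v Hv. apply NNPP. intros Hc. apply Hn. exists v. split; auto.
    intros N. apply NNPP. intros Hc2. apply Hc. exists N. intros n Hn' E. apply Hc2. exists n. auto. }
  destruct (finite_max (fun v N => forall n, N <= n -> pre (z n) (length (l ++ [v])) <> l ++ [v]) _
     ltac:(intros v N N' HN HP n Hn'; apply HP; lia) H) as [N HN].
  destruct (Hl N) as [n [Hn1 Hn2]].
  apply (HN (z n (length l)) (HB _ _) n Hn1).
  rewrite length_app. simpl. rewrite Nat.add_1_r, pre_S, Hn2. reflexivity.
Qed.

Definition ext_fn (z : nat -> nat -> nat) (B : nat -> nat) (l : list nat) : nat :=
  match excluded_middle_informative (exists v, v <= B (length l) /\ infl z (l ++ [v])) with
  | left H => proj1_sig (constructive_indefinite_description _ H)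
  | right _ => 0
  end.

Fixpoint lseq z B k : list nat := match k with 0 => [] | S k => lseq z B k ++ [ext_fn z B (lseq z B k)] end.

Lemma lseq_len z B k : length (lseq z B k) = k.
Proof. induction k; simpl; auto. rewrite length_app, IHk. simpl. lia. Qed.

Lemma lseq_prop z B k : (forall n i, z n i <= B i) ->
  infl z (lseq z B k) /\ forall i, i < k -> nth i (lseq z B k) 0 <= B i.
Proof.
  intros HB. induction k.
  - split. intros N. exists N. split; auto. intros; lia.
  - destruct IHk as [H1 H2]. simpl. unfold ext_fn.
    destruct (excluded_middle_informative _) as [He|Hn].
    + destruct (constructive_indefinite_description _ He) as [v [Hv1 Hv2]]. simpl. split; auto.
      intros i Hi. destruct (Nat.eq_dec i k).
      * subst. rewrite app_nth2 by (rewrite lseq_len; lia). rewrite lseq_len, Nat.sub_diag. simpl.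
        rewrite lseq_len in Hv1. auto.
      * rewrite app_nth1 by (rewrite lseq_len; lia). apply H2. lia.
    + exfalso. apply Hn. apply infl_step; auto.
Qed.

Lemma lseq_pre z B k k' : k <= k' -> firstn k (lseq z B k') = lseq z B k.
Proof.
  induction 1. rewrite <- (lseq_len z B k) at 1. apply firstn_all.
  simpl. rewrite firstn_app, IHle, lseq_len. replace (k - m) with 0 by lia. simpl. apply app_nil_r.
Qed.

Lemma limit_point (z : nat -> nat -> nat) (B : nat -> nat) :
  (forall n i, z n i <= B i) ->
  exists y, (forall i, y i <= B i) /\ forall p N, exists n, N <= n /\ pre (z n) p = pre y p.
Proof.
  intros HB. exists (fun i => nth i (lseq z B (S i)) 0).
  assert (Hy : forall p, pre (fun i => nth i (lseq z B (S i)) 0) p = lseq z B p).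
  { intros p. apply nth_ext with (d := 0) (d' := 0).
    - rewrite length_pre, lseq_len. auto.
    - intros i Hi. rewrite length_pre in Hi. rewrite nth_pre by auto.
      rewrite <- (lseq_pre z B (S i) p) by lia. rewrite nth_firstn.
      destruct (i <? S i) eqn:E; auto. apply Nat.ltb_ge in E. lia. }
  split.
  - intros i. apply (proj2 (lseq_prop z B (S i) HB)). lia.
  - intros p N. destruct (proj1 (lseq_prop z B p HB) N) as [n [Hn1 Hn2]].
    exists n. split; auto. rewrite Hy. rewrite lseq_len in Hn2. auto.
Qed.

Lemma klim (Rel : list bool -> list nat -> Prop) (B : nat -> nat) (xs : nat -> cantor) (gs : nat -> baire) :
  (forall n i, i < n -> gs n i <= B i) ->
  (forall n k, k <= n -> Rel (pre (xs n) k) (pre (gs n) k)) ->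
  exists x g, (forall i, g i <= B i) /\ (forall k, Rel (pre x k) (pre g k)) /\
    forall p N, exists n, N <= n /\ pre (xs n) p = pre x p.
Proof.
  intros HB HR.
  set (z := fun n j => if Nat.even j then b2n (xs n (Nat.div2 j)) else Nat.min (gs n (Nat.div2 j)) (B (Nat.div2 j))).
  set (B' := fun j => if Nat.even j then 1 else B (Nat.div2 j)).
  destruct (limit_point z B') as [y [Hy1 Hy2]].
  { intros n j. unfold z, B'. destruct (Nat.even j). destruct (xs n _); simpl; lia. lia. }
  set (x := fun i => negb (Nat.eqb (y (2 * i)) 0)).
  set (g := fun i => y (2 * i + 1)).
  assert (Hagree : forall p N, exists n, N <= n /\ (forall i, i < p -> xs n i = x i) /\ (forall i, i < p -> Nat.min (gs n i) (B i) = g i)).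
  { intros p N. destruct (Hy2 (2 * p) N) as [n [Hn1 Hn2]]. exists n. split; auto.
    pose proof (pre_eq_inv _ _ _ Hn2) as E. split.
    - intros i Hi. specialize (E (2 * i) ltac:(lia)). unfold z in E.
      rewrite Nat.even_even, Nat.div2_double in E. unfold x. rewrite <- E.
      destruct (xs n i); reflexivity.
    - intros i Hi. specialize (E (2 * i + 1) ltac:(lia)). unfold z in E.
      rewrite Nat.even_odd, Nat.div2_odd' in E. exact E. }
  exists x, g. split; [|split].
  - intros i. specialize (Hy1 (2 * i + 1)). unfold B' in Hy1. rewrite Nat.even_odd, Nat.div2_odd' in Hy1. exact Hy1.
  - intros k. destruct (Hagree k k) as [n [Hn1 [Hn2 Hn3]]].
    specialize (HR n k Hn1).
    rewrite (pre_ext (xs n) x k Hn2) in HR.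
    rewrite (pre_ext (gs n) g k) in HR; auto.
    intros i Hi. rewrite <- Hn3 by auto. specialize (HB n i ltac:(lia)). lia.
  - intros p N. destruct (Hagree p N) as [n [Hn1 [Hn2 _]]]. exists n. split; auto. apply pre_ext. auto.
Qed.

Lemma Cf_good Rel f x : Cf Rel f x <-> forall n, exists tau, good Rel f (pre x n) tau.
Proof.
  split.
  - intros [g [Hg HR]] n. exists (pre g n). unfold good. rewrite !length_pre. split; [auto|split].
    + intros i Hi. rewrite nth_pre by auto. auto.
    + intros k Hk. rewrite !firstn_pre by auto. auto.
  - intros H.
    set (tau := fun n => proj1_sig (constructive_indefinite_description _ (H n))).
    assert (Ht : forall n, good Rel f (pre x n) (tau n)) by (intros n; unfold tau; destruct constructive_indefinite_description; auto).
    destruct (klim Rel f (fun _ => x) (fun n i => nth i (tau n) 0)) as [x' [g [Hg1 [Hg2 Hg3]]]].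
    + intros n i Hi. destruct (Ht n) as [_ [H2 _]]. apply H2. rewrite length_pre. auto.
    + intros n k Hk. destruct (Ht n) as [H1 [_ H3]]. rewrite length_pre in *.
      rewrite pre_nth_list by lia. rewrite <- (firstn_pre x n k Hk). apply H3. auto.
    + exists g. split; auto. intros n.
      destruct (Hg3 n 0) as [m [_ Hm]]. rewrite Hm. auto.
Qed.

Lemma Pi01_Cf Rel f : recursive_pred Rel -> Pi01 f (Cf Rel f).
Proof.
  intros HR. destruct (Pi01_good Rel f HR) as [e He]. exists e. intros x.
  rewrite Cf_good. apply He.
Qed.

Open Scope R_scope.

Lemma hpow_pos n : 0 < (/2)^n.
Proof. apply pow_lt. lra. Qed.

Lemma hpow_S_lt n : (/2)^(S n) < (/2)^n.
Proof. simpl. pose proof (hpow_pos n). lra. Qed.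

Lemma hpow_le m n : (m <= n)%nat -> (/2)^n <= (/2)^m.
Proof. induction 1. lra. pose proof (hpow_S_lt m0). lra. Qed.

Lemma hpow_lt m n : (m < n)%nat -> (/2)^n < (/2)^m.
Proof. intros H. pose proof (hpow_le (S m) n H). pose proof (hpow_S_lt m). lra. Qed.

Definition cyl (sg : list bool) (x : cantor) : Prop := pre x (length sg) = sg.
Definition w (s : R) (sg : list bool) : R := Rpower ((/2)^(length sg)) s.
Definition wo (s : R) (o : option (list bool)) : R := match o with Some sg => w s sg | None => 0 end.
Fixpoint psumS (s : R) (S : nat -> option (list bool)) (N : nat) : R :=
  match N with O => 0 | Datatypes.S N => psumS s S N + wo s (S N) end.
Definition ncov (m : nat) (A : cantor -> Prop) (S : nat -> option (list bool)) : Prop :=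
  (forall i sg, S i = Some sg -> (m <= length sg)%nat) /\
  (forall x, A x -> exists i sg, S i = Some sg /\ cyl sg x).
Definition Net (s : R) (m : nat) (eps : R) (A : cantor -> Prop) : Prop :=
  forall S a, ncov m A S -> (forall N, psumS s S N <= a) -> eps <= a.

Lemma w_pos s sg : 0 < w s sg.
Proof. unfold w, Rpower. apply exp_pos. Qed.
Lemma wo_nonneg s o : 0 <= wo s o.
Proof. destruct o; simpl. apply Rlt_le, w_pos. lra. Qed.
Lemma psumS_mono s S N N' : (N <= N')%nat -> psumS s S N <= psumS s S N'.
Proof. induction 1. lra. simpl. pose proof (wo_nonneg s (S m)). lra. Qed.
Lemma psumS_nonneg s S N : 0 <= psumS s S N.
Proof. pose proof (psumS_mono s S 0 N ltac:(lia)). simpl in H. lra. Qed.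

Lemma Net_mono s m eps A B : Net s m eps A -> (forall x, A x -> B x) -> Net s m eps B.
Proof.
  intros H HAB S a [H1 H2] Ha. apply (H S a); auto. split; auto.
Qed.

Lemma Net_weaken s m eps eps' A : Net s m eps A -> eps' <= eps -> Net s m eps' A.
Proof. intros H He S a Hc Ha. specialize (H S a Hc Ha). lra. Qed.

Lemma first_diff (x y : cantor) L : pre x L <> pre y L ->
  exists n, (n < L)%nat /\ (forall k, (k < n)%nat -> x k = y k) /\ x n <> y n.
Proof.
  intros H. apply NNPP. intros Hn. apply H. apply pre_ext.
  intros i. induction i as [i IH] using lt_wf_ind. intros Hi.
  apply NNPP. intros Hxy. apply Hn. exists i. split; auto. split; auto.
  intros k Hk. apply IH; lia.
Qed.

Lemma cyl_diam sg : diam_le (cyl sg) ((/2)^(length sg)).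
Proof.
  intros x y Hx Hy n Hagree Hd. apply hpow_le.
  destruct (Nat.lt_ge_cases n (length sg)) as [Hl|Hl]; auto.
  exfalso. apply Hd. unfold cyl in *.
  rewrite <- Hy in Hx at 2. apply (pre_eq_inv _ _ _ Hx). auto.
Qed.

Lemma Rpower_hpow s n : 0 < s -> Rpower ((/2)^n) s = (Rpower (/2) s)^n.
Proof.
  intros Hs. rewrite <- Rpower_pow by lra. rewrite <- Rpower_pow by (unfold Rpower; apply exp_pos).
  rewrite !Rpower_mult. f_equal. lra.
Qed.

Lemma Hs_to_Net s delta eps A m : 0 < s -> Hs_delta_ge s delta eps A -> (/2)^m <= delta -> Net s m eps A.
Proof.
  intros Hs H Hm S a Hc Ha.
  assert (Hd : 0 < delta) by (pose proof (hpow_pos m); lra).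
  assert (Hgen : forall eta, 0 < eta -> eps <= a + eta).
  { intros eta Heta.
    set (e' := Rmin eta (Rpower delta s)).
    assert (He'1 : 0 < e') by (unfold e'; apply Rmin_glb_lt; auto; unfold Rpower; apply exp_pos).
    assert (He'2 : e' <= eta) by apply Rmin_l.
    assert (He'3 : e' <= Rpower delta s) by apply Rmin_r.
    set (r := fun i => match S i with Some sg => (/2)^(length sg) | None => Rpower (e' * (/2)^(Datatypes.S i)) (/s) end).
    set (U := fun i => match S i with Some sg => cyl sg | None => fun _ => False end).
    assert (Hpw : forall i, Rpower (r i) s = match S i with Some sg => w s sg | None => e' * (/2)^(Datatypes.S i) end).
    { intros i. unfold r. destruct (S i); auto. rewrite Rpower_mult.
      replace (/ s * s) with 1 by (field; lra). apply Rpower_1.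
      apply Rmult_lt_0_compat; auto. apply hpow_pos. }
    assert (Hsum : forall N, sum_f_R0 (fun i => Rpower (r i) s) N + e' * (/2)^(Datatypes.S N) <= psumS s S (Datatypes.S N) + e').
    { induction N.
      - simpl. rewrite Hpw. destruct (S 0%nat); simpl.
        + pose proof (w_pos s l). lra.
        + lra.
      - simpl sum_f_R0. cbn [psumS]. rewrite Hpw.
        pose proof (Rmult_lt_compat_l e' _ _ He'1 (hpow_S_lt (Datatypes.S N))).
        cbn [psumS] in IHN.
        destruct (S (Datatypes.S N)) eqn:E; simpl wo.
        + lra.
        + simpl in *. lra. }
    apply (H U r).
    - intros i. split.
      + unfold r. destruct (S i). apply hpow_pos. unfold Rpower. apply exp_pos.
      + unfold r. destruct (S i) eqn:E.
        * eapply Rle_trans; [|exact Hm]. apply hpow_le. destruct Hc as [Hc _]. eapply Hc. eauto.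
        * replace delta with (Rpower (Rpower delta s) (/s)).
          -- apply Rle_Rpower_l. apply Rlt_le, Rinv_0_lt_compat; auto.
             split. apply Rmult_lt_0_compat; auto. apply hpow_pos.
             pose proof (hpow_le 0 (Datatypes.S i) ltac:(lia)) as H0. rewrite pow_O in H0.
             assert (e' * (/2)^(Datatypes.S i) <= e' * 1) by (apply Rmult_le_compat_l; lra). lra.
          -- rewrite Rpower_mult. replace (s * /s) with 1 by (field; lra). apply Rpower_1; auto.
    - intros i. unfold U, r. destruct (S i). apply cyl_diam. intros x y [].
    - intros x Hx. destruct Hc as [_ Hc]. destruct (Hc x Hx) as [i [sg [E1 E2]]].
      exists i. unfold U. rewrite E1. auto.
    - intros N. specialize (Hsum N). specialize (Ha (Datatypes.S N)).
      pose proof (hpow_pos (Datatypes.S N)). nra. }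
  destruct (Rle_or_lt eps a); auto.
  specialize (Hgen ((eps - a)/2) ltac:(lra)). lra.
Qed.

Lemma least_L r : 0 < r -> exists L, (/2)^L <= r /\ forall L', (/2)^L' <= r -> (L <= L')%nat.
Proof.
  intros Hr. destruct (pow_lt_1_zero (/2) ltac:(rewrite Rabs_right; lra) r Hr) as [N HN].
  specialize (HN N (le_n N)). rewrite Rabs_right in HN by (apply Rle_ge, Rlt_le, hpow_pos).
  apply Rlt_le in HN. clear -HN. induction N as [N IH] using lt_wf_ind.
  destruct (classic (exists L', (/2)^L' <= r /\ (L' < N)%nat)) as [[L' [H1 H2]]|Hn].
  - apply (IH L' H2) in H1. exact H1.
  - exists N. split. lra. intros L' HL'. apply Nat.nlt_ge. intros Hc. apply Hn. eauto.
Qed.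

Lemma Net_to_Hs s m eps A : 0 < s -> Net s m eps A -> Hs_delta_ge s ((/2)^m) eps A.
Proof.
  intros Hs H U r Hr Hdiam Hcov a Ha.
  assert (HL : forall i, exists L, (/2)^L <= r i /\ forall L', (/2)^L' <= r i -> (L <= L')%nat)
    by (intros i; apply least_L, Hr).
  assert (Hsg : forall i, exists sg, (/2)^(length sg) <= r i /\ (m <= length sg)%nat /\ forall y, U i y -> cyl sg y).
  { intros i. destruct (HL i) as [L [HL1 HL2]].
    assert (Hm : (m <= L)%nat).
    { apply Nat.nlt_ge. intros Hc. pose proof (hpow_lt L m Hc). destruct (Hr i). lra. }
    destruct (classic (exists x, U i x)) as [[x Hx]|Hn].
    - exists (pre x L). rewrite length_pre. split; auto. split; auto. intros y Hy.
      unfold cyl. rewrite length_pre. apply NNPP. intros Hne.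
      destruct (first_diff y x L Hne) as [n [Hn1 [Hn2 Hn3]]].
      specialize (Hdiam i y x Hy Hx n Hn2 Hn3). apply HL2 in Hdiam. lia.
    - exists (repeat false L). rewrite repeat_length. split; auto. split; auto.
      intros y Hy. exfalso. eauto. }
  assert (HS0 : exists S : nat -> option (list bool), forall i, exists sg, S i = Some sg /\ (/2)^(length sg) <= r i /\ (m <= length sg)%nat /\ forall y, U i y -> cyl sg y).
  { exists (fun i => Some (proj1_sig (constructive_indefinite_description _ (Hsg i)))).
    intros i. destruct (constructive_indefinite_description _ (Hsg i)) as [sg Hs']. simpl. eauto. }
  destruct HS0 as [S HS].
  apply (H S a).
  - split.
    + intros i sg E. destruct (HS i) as [sg' [E' [_ [Hm _]]]]. rewrite E' in E. injection E as ->. auto.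
    + intros x Hx. destruct (Hcov x Hx) as [i Hi]. destruct (HS i) as [sg' [E' [_ [_ Hc]]]].
      exists i, sg'. auto.
  - assert (Hp : forall N, psumS s S (Datatypes.S N) <= sum_f_R0 (fun i => Rpower (r i) s) N).
    { induction N.
      - cbn [psumS sum_f_R0]. destruct (HS 0%nat) as [sg [E [H1 _]]]. rewrite E. cbn [wo]. unfold w.
        rewrite Rplus_0_l. apply Rle_Rpower_l. lra. split; auto. apply hpow_pos.
      - cbn [psumS sum_f_R0]. cbn [psumS] in IHN. destruct (HS (Datatypes.S N)) as [sg [E [H1 _]]]. rewrite E. simpl wo. unfold w.
        assert (Rpower ((/2)^(length sg)) s <= Rpower (r (Datatypes.S N)) s).
        { apply Rle_Rpower_l. lra. split; auto. apply hpow_pos. }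
        lra. }
    intros N. destruct N.
    + simpl. specialize (Ha 0%nat). simpl in Ha. pose proof (exp_pos (s * ln (r 0%nat))). unfold Rpower in Ha. lra.
    + eapply Rle_trans. apply Hp. apply Ha.
Qed.

Fixpoint psumP (s : R) (P : option (list bool) -> bool) (S : nat -> option (list bool)) (N : nat) : R :=
  match N with O => 0 | Datatypes.S N => psumP s P S N + (if P (S N) then wo s (S N) else 0) end.

Lemma psumP_split s P S N : psumP s P S N + psumP s (fun o => negb (P o)) S N = psumS s S N.
Proof. induction N; simpl. lra. destruct (P (S N)); simpl; lra. Qed.

Lemma psumP_nonneg s P S N : 0 <= psumP s P S N.
Proof. induction N; simpl. lra. pose proof (wo_nonneg s (S N)). destruct (P (S N)); lra. Qed.

Lemma psumP_mono s P S N N' : (N <= N')%nat -> psumP s P S N <= psumP s P S N'.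
Proof. induction 1. lra. simpl. pose proof (wo_nonneg s (S m)). destruct (P (S m)); lra. Qed.

Lemma psumP_le s P S N : psumP s P S N <= psumS s S N.
Proof. pose proof (psumP_split s P S N). pose proof (psumP_nonneg s (fun o => negb (P o)) S N). lra. Qed.

Definition lsum (s : R) (L : list (list bool)) : R := fold_right (fun t acc => w s t + acc) 0 L.

Lemma lsum_nonneg s L : 0 <= lsum s L.
Proof. induction L; simpl. lra. pose proof (w_pos s a). lra. Qed.

Definition inL (L : list (list bool)) (o : option (list bool)) : bool :=
  match o with Some t => if in_dec (list_eq_dec bool_dec) t L then true else false | None => false end.

Lemma psumP_inL s S N L : NoDup L -> (forall t, In t L -> exists i, (i < N)%nat /\ S i = Some t) ->
  lsum s L <= psumP s (inL L) S N.
Proof.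
  revert N. induction L as [|t L IH]; intros N Hnd Hall; simpl.
  - apply psumP_nonneg.
  - inversion Hnd; subst.
    assert (Hsplit : forall N', psumP s (inL (t :: L)) S N' =
       psumP s (fun o => match o with Some t' => if list_eq_dec bool_dec t' t then true else false | None => false end) S N'
       + psumP s (inL L) S N').
    { induction N'; simpl. lra. rewrite IHN'. unfold inL. destruct (S N') as [t'|]; [|lra].
      destruct (list_eq_dec bool_dec t' t); destruct (in_dec (list_eq_dec bool_dec) t' (t :: L)) as [Hi|Hi];
        destruct (in_dec (list_eq_dec bool_dec) t' L) as [Hi2|Hi2]; subst; simpl in *; try tauto; try lra.
      destruct Hi; subst; tauto. }
    rewrite Hsplit.
    assert (Ht1 : w s t <= psumP s (fun o => match o with Some t' => if list_eq_dec bool_dec t' t then true else false | None => false end) S N).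
    { destruct (Hall t (or_introl eq_refl)) as [i [Hi HSi]].
      assert (G : forall N', (i < N')%nat -> w s t <= psumP s (fun o => match o with Some t' => if list_eq_dec bool_dec t' t then true else false | None => false end) S N').
      { induction N'; intros HN'. lia. simpl. destruct (Nat.eq_dec i N').
        - subst. rewrite HSi. destruct (list_eq_dec bool_dec t t); [|tauto]. simpl.
          pose proof (psumP_nonneg s (fun o => match o with Some t' => if list_eq_dec bool_dec t' t then true else false | None => false end) S N'). lra.
        - pose proof (IHN' ltac:(lia)). destruct (S N') as [t'|]; [|lra].
          destruct (list_eq_dec bool_dec t' t); simpl; [pose proof (w_pos s t')|]; lra. }
      apply G; auto. }
    pose proof (IH N H2 (fun t' Ht' => Hall t' (or_intror Ht'))). lra.
Qed.

Definition least (P : nat -> Prop) : nat :=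
  match excluded_middle_informative (exists n, P n /\ forall n', P n' -> (n <= n')%nat) with
  | left H => proj1_sig (constructive_indefinite_description _ H)
  | right _ => 0%nat
  end.

Lemma least_spec (P : nat -> Prop) : (exists n, P n) -> P (least P) /\ forall n, P n -> (least P <= n)%nat.
Proof.
  intros [n Hn].
  assert (E : exists n, P n /\ forall n', P n' -> (n <= n')%nat).
  { clear -Hn. induction n as [n IH] using lt_wf_ind.
    destruct (classic (exists n', P n' /\ (n' < n)%nat)) as [[n' [H1 H2]]|Hno].
    - exact (IH n' H2 H1).
    - exists n. split; auto. intros n' Hn'. apply Nat.nlt_ge. intros Hc. apply Hno. eauto. }
  unfold least. destruct (excluded_middle_informative _) as [H|H]; [|tauto].
  destruct (constructive_indefinite_description _ H) as [k Hk]. simpl. exact Hk.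
Qed.

Definition prefix (t sg : list bool) : Prop := (length t <= length sg)%nat /\ firstn (length t) sg = t.

Lemma cyl_prefix t sg x : cyl sg x -> cyl t x -> (length t <= length sg)%nat -> prefix t sg.
Proof.
  unfold cyl, prefix. intros H1 H2 Hl. split; auto. rewrite <- H1, firstn_pre; auto.
Qed.

Lemma prefix_cyl t sg x : cyl sg x -> prefix t sg -> cyl t x.
Proof.
  unfold cyl, prefix. intros H1 [Hl H2]. pose proof (firstn_pre x (length sg) (length t) Hl) as E.
  rewrite H1, H2 in E. symmetry. exact E.
Qed.

Lemma prefix_comparable t t' sg : prefix t sg -> prefix t' sg -> prefix t t' \/ prefix t' t.
Proof.
  unfold prefix. intros [H1 H2] [H3 H4].
  destruct (Nat.le_ge_cases (length t) (length t')).
  - left. split; auto. rewrite <- H4 at 1. rewrite firstn_firstn. rewrite Nat.min_l by auto. exact H2.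
  - right. split; auto. rewrite <- H2 at 1. rewrite firstn_firstn. rewrite Nat.min_l by auto. exact H4.
Qed.

Lemma cyl_pre x L : cyl (pre x L) x.
Proof. unfold cyl. rewrite length_pre. reflexivity. Qed.

Lemma cyl_eq t x : cyl t x -> t = pre x (length t).
Proof. unfold cyl. auto. Qed.

Lemma list_bound (L : list (list bool)) (S : nat -> option (list bool)) :
  (forall t, In t L -> exists i, S i = Some t) -> exists N0, forall t, In t L -> exists i, (i < N0)%nat /\ S i = Some t.
Proof.
  induction L as [|t L IH]; intros H.
  - exists 0%nat. intros t [].
  - destruct IH as [N1 H1]. intros t' Ht'. apply H. right. auto.
    destruct (H t (or_introl eq_refl)) as [i Hi]. exists (N1 + Datatypes.S i)%nat.
    intros t' [<-|Ht']. exists i. split; auto. lia.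
    destruct (H1 t' Ht') as [j [Hj1 Hj2]]. exists j. split; auto. lia.
Qed.

Definition interleave (L : list (list bool)) (S V : nat -> option (list bool)) (j : nat) : option (list bool) :=
  if Nat.even j then (if inL L (S (Nat.div2 j)) then None else S (Nat.div2 j)) else V (Nat.div2 j).

Lemma interleave_sum s L S V N :
  psumS s (interleave L S V) (2 * N) = psumP s (fun o => negb (inL L o)) S N + psumS s V N.
Proof.
  induction N. simpl. lra.
  replace (2 * Datatypes.S N)%nat with (Datatypes.S (Datatypes.S (2 * N))) by lia.
  cbn [psumS psumP]. rewrite IHN. unfold interleave.
  replace (Datatypes.S (2 * N)) with (2 * N + 1)%nat by lia.
  rewrite Nat.even_even, Nat.even_odd, Nat.div2_double, Nat.div2_odd'.
  destruct (inL L (S N)); simpl; lra.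
Qed.

Lemma local_opt s m (B : cantor -> Prop) (S V : nat -> option (list bool)) (b nu beta : R) (L : list (list bool)) :
  ncov m B S -> (forall N, psumS s S N <= b) ->
  (forall S' a, ncov m B S' -> (forall N, psumS s S' N <= a) -> nu <= a) ->
  NoDup L -> (forall t, In t L -> exists i, S i = Some t) ->
  (forall i sg, V i = Some sg -> (m <= length sg)%nat) ->
  (forall x, B x -> (exists t, In t L /\ cyl t x) -> exists i sg, V i = Some sg /\ cyl sg x) ->
  (forall N, psumS s V N <= beta) ->
  lsum s L <= b - nu + beta.
Proof.
  intros [HS1 HS2] Hb Hnu Hnd HL HV1 HV2 Hbeta.
  destruct (list_bound L S HL) as [N0 HN0].
  assert (Hneg : forall N, psumP s (fun o => negb (inL L o)) S N <= b - lsum s L).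
  { intros N. set (N' := (N + N0)%nat).
    pose proof (psumP_mono s (fun o => negb (inL L o)) S N N' ltac:(unfold N'; lia)).
    pose proof (psumP_split s (inL L) S N'). pose proof (Hb N').
    pose proof (psumP_inL s S N' L Hnd ltac:(intros t Ht; destruct (HN0 t Ht) as [i [Hi1 Hi2]]; exists i; split; [unfold N'; lia|auto])).
    lra. }
  assert (Hc : nu <= b - lsum s L + beta).
  { apply (Hnu (interleave L S V)).
    - split.
      + intros j sg E. unfold interleave in E. destruct (Nat.even j).
        * destruct (inL L (S (Nat.div2 j))). discriminate. eauto.
        * eauto.
      + intros x Hx. destruct (HS2 x Hx) as [i [sg [E1 E2]]].
        destruct (inL L (Some sg)) eqn:EL.
        * destruct (HV2 x Hx) as [j [sg' [F1 F2]]].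
          { exists sg. split; auto. unfold inL in EL. destruct (in_dec _ sg L); auto. discriminate. }
          exists (2 * j + 1)%nat, sg'. unfold interleave. rewrite Nat.even_odd, Nat.div2_odd'. auto.
        * exists (2 * i)%nat, sg. unfold interleave. rewrite Nat.even_even, Nat.div2_double, E1, EL. auto.
    - intros N. eapply Rle_trans. apply (psumS_mono s _ N (2 * N)). lia.
      rewrite interleave_sum. pose proof (Hneg N). pose proof (Hbeta N). lra. }
  lra.
Qed.

Lemma sum_zero K : sum_f_R0 (fun _ => 0) K = 0.
Proof. induction K; simpl; lra. Qed.

Lemma sum_ext_le (f g : nat -> R) K : (forall k, (k <= K)%nat -> f k = g k) -> sum_f_R0 f K = sum_f_R0 g K.
Proof. induction K; intros H; simpl. apply H; lia. rewrite IHK by (intros; apply H; lia). rewrite H; auto. Qed.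

Lemma sum_indicator j c K : (j <= K)%nat -> sum_f_R0 (fun k => if Nat.eqb j k then c else 0) K = c.
Proof.
  induction K; intros H; simpl.
  - replace j with 0%nat by lia. simpl. auto.
  - destruct (Nat.eq_dec j (Datatypes.S K)).
    + subst. rewrite Nat.eqb_refl.
      rewrite (sum_ext_le _ (fun _ => 0)). rewrite sum_zero. lra.
      intros k Hk. destruct (Nat.eqb_spec (Datatypes.S K) k); auto. lia.
    + rewrite IHK by lia. destruct (Nat.eqb_spec j (Datatypes.S K)); [lia|lra].
Qed.

Lemma lsum_partition s L (kf : list bool -> nat) K : (forall t, In t L -> (kf t <= K)%nat) ->
  lsum s L = sum_f_R0 (fun k => lsum s (filter (fun t => Nat.eqb (kf t) k) L)) K.
Proof.
  induction L as [|t L IH]; intros H.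
  - simpl. rewrite sum_zero. reflexivity.
  - rewrite (sum_ext_le _ (fun k => (if Nat.eqb (kf t) k then w s t else 0) + lsum s (filter (fun t => Nat.eqb (kf t) k) L))).
    + rewrite sum_plus, sum_indicator, <- IH. simpl. reflexivity.
      intros; apply H; right; auto. apply H; left; auto.
    + intros k Hk. simpl. destruct (Nat.eqb (kf t) k); simpl; lra.
Qed.

Lemma sum_at_most_one (Pk : nat -> bool) c K : 0 <= c ->
  (forall k k', (k <= K)%nat -> (k' <= K)%nat -> Pk k = true -> Pk k' = true -> k = k') ->
  sum_f_R0 (fun k => if Pk k then c else 0) K <= c.
Proof.
  induction K; intros Hc H; simpl.
  - destruct (Pk 0%nat); lra.
  - destruct (Pk (Datatypes.S K)) eqn:E.
    + rewrite (sum_ext_le _ (fun _ => 0)). rewrite sum_zero. lra.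
      intros k Hk. destruct (Pk k) eqn:E'; auto. specialize (H k (Datatypes.S K) ltac:(lia) ltac:(lia) E' E). lia.
    + assert (sum_f_R0 (fun k => if Pk k then c else 0) K <= c) by (apply IHK; auto; intros; apply H; auto; lia). lra.
Qed.

Lemma sum_disj K (Pk : nat -> option (list bool) -> bool) s S N :
  (forall k k' o, (k <= K)%nat -> (k' <= K)%nat -> Pk k o = true -> Pk k' o = true -> k = k') ->
  sum_f_R0 (fun k => psumP s (Pk k) S N) K <= psumS s S N.
Proof.
  intros H. induction N.
  - simpl. rewrite sum_zero. lra.
  - cbn [psumP psumS]. rewrite sum_plus.
    pose proof (sum_at_most_one (fun k => Pk k (S N)) (wo s (S N)) K (wo_nonneg s _) (fun k k' Hk Hk' E1 E2 => H k k' (S N) Hk Hk' E1 E2)).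
    lra.
Qed.

Lemma sum_gap K (f g : nat -> R) gam : (forall k, (k <= K)%nat -> g k - gam < f k) ->
  sum_f_R0 g K - (INR K + 1) * gam < sum_f_R0 f K.
Proof.
  induction K; intros H; cbn [sum_f_R0].
  - specialize (H 0%nat (le_n _)). simpl. lra.
  - rewrite S_INR. specialize (IHK ltac:(intros; apply H; lia)). specialize (H (Datatypes.S K) (le_n _)). lra.
Qed.

Lemma comb K (P : nat -> nat -> R) (W : nat -> R) (b : R) :
  (forall k N N', (N <= N')%nat -> P k N <= P k N') ->
  (forall k, (k <= K)%nat -> forall beta, (forall N, P k N <= beta) -> W k <= beta) ->
  (forall N, sum_f_R0 (fun k => P k N) K <= b) -> sum_f_R0 W K <= b.
Proof.
  intros Hm HW Hb. destruct (Rle_or_lt (sum_f_R0 W K) b) as [|Hlt]; auto. exfalso.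
  set (gam := (sum_f_R0 W K - b) / (INR K + 1)).
  assert (HK : 0 < INR K + 1) by (pose proof (pos_INR K); lra).
  assert (Hg : 0 < gam) by (unfold gam; apply Rdiv_lt_0_compat; lra).
  assert (Hex : forall k, (k <= K)%nat -> exists N, W k - gam < P k N).
  { intros k Hk. apply NNPP. intros Hn. specialize (HW k Hk (W k - gam)).
    assert (W k <= W k - gam). { apply HW. intros N. apply Rnot_lt_le. intros Hc. apply Hn. eauto. } lra. }
  destruct (finite_max (fun k N => W k - gam < P k N) K) as [N HN].
  { intros v N N' HN HP. specialize (Hm v N N' HN). lra. }
  { exact Hex. }
  pose proof (sum_gap K (fun k => P k N) W gam HN). specialize (Hb N).
  unfold gam in H. field_simplify in H; [|lra]. lra.
Qed.

Lemma geom_sum K : sum_f_R0 (fun k => (/2)^(Datatypes.S k)) K = 1 - (/2)^(Datatypes.S K).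
Proof. induction K. simpl. lra. cbn [sum_f_R0]. rewrite IHK. simpl. lra. Qed.

Fixpoint Lof (T : nat -> option (list bool)) (N : nat) : list (list bool) :=
  match N with O => [] | Datatypes.S N => match T N with Some t => t :: Lof T N | None => Lof T N end end.

Lemma Lof_sum s T N : lsum s (Lof T N) = psumS s T N.
Proof. induction N; simpl; auto. destruct (T N); simpl; lra. Qed.

Lemma Lof_in T N t : In t (Lof T N) <-> exists j, (j < N)%nat /\ T j = Some t.
Proof.
  induction N; simpl. split. intros []. intros [j [Hj _]]; lia.
  destruct (T N) eqn:E; simpl; rewrite ?IHN; split.
  - intros [<-|[j [Hj1 Hj2]]]. exists N; auto. exists j; split; auto.
  - intros [j [Hj1 Hj2]]. destruct (Nat.eq_dec j N). subst. left. congruence. right. exists j. split; auto. lia.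
  - intros [j [Hj1 Hj2]]. exists j; split; auto.
  - intros [j [Hj1 Hj2]]. destruct (Nat.eq_dec j N). subst. congruence. exists j. split; auto. lia.
Qed.

Lemma Lof_nodup T N : (forall j j' t, T j = Some t -> T j' = Some t -> j = j') -> NoDup (Lof T N).
Proof.
  intros Hinj. induction N; simpl. constructor.
  destruct (T N) eqn:E; auto. constructor; auto.
  intros Hin. apply Lof_in in Hin. destruct Hin as [j [Hj1 Hj2]].
  specialize (Hinj _ _ _ E Hj2). lia.
Qed.

Lemma psumS_restrict s (P : option (list bool) -> bool) (S : nat -> option (list bool)) N : psumS s (fun i => if P (S i) then S i else None) N = psumP s P S N.
Proof. induction N; simpl; auto. rewrite IHN. destruct (P (S N)); simpl; lra. Qed.

Lemma mono_Ak (Ak : nat -> cantor -> Prop) : (forall k x, Ak k x -> Ak (Datatypes.S k) x) ->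
  forall k k' x, (k <= k')%nat -> Ak k x -> Ak k' x.
Proof. intros H k k' x Hk. induction Hk; auto. Qed.

Lemma glb_exists s m (B : cantor -> Prop) (c : R) :
  (exists S a, ncov m B S /\ (forall N, psumS s S N <= a) /\ a < c) ->
  exists nu, (forall S a, ncov m B S -> (forall N, psumS s S N <= a) -> nu <= a) /\ nu < c /\
    forall gam, 0 < gam -> exists S a, ncov m B S /\ (forall N, psumS s S N <= a) /\ a < nu + gam.
Proof.
  intros [S0 [a0 [H1 [H2 H3]]]].
  set (E := fun y => exists S a, ncov m B S /\ (forall N, psumS s S N <= a) /\ y = - a).
  assert (Hb : bound E).
  { exists 0. intros y [S [a [_ [Ha ->]]]]. specialize (Ha 0%nat). simpl in Ha. lra. }
  assert (Hne : exists y, E y) by (exists (- a0); exists S0, a0; auto).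
  destruct (completeness E Hb Hne) as [l [Hl1 Hl2]].
  exists (- l). split; [|split].
  - intros S a Hc Ha. assert (E (- a)) by (exists S, a; auto). specialize (Hl1 _ H). lra.
  - assert (E (- a0)) by (exists S0, a0; auto). specialize (Hl1 _ H). lra.
  - intros gam Hg. apply NNPP. intros Hn.
    assert (l <= l - gam).
    { apply Hl2. intros y [S [a [Hc [Ha ->]]]]. apply Rnot_lt_le. intros Hc2. apply Hn. exists S, a. split; auto. split; auto. lra. }
    lra.
Qed.

Lemma increasing_Net s m eps A (Ak : nat -> cantor -> Prop) : 0 < s ->
  (forall k x, Ak k x -> Ak (Datatypes.S k) x) -> (forall x, A x -> exists k, Ak k x) ->
  Net s m eps A -> forall eta, 0 < eta -> exists k, Net s m (eps - eta) (Ak k).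
Proof.
  intros Hs Hmono HA HNet eta Heta. apply NNPP. intros Hno.
  set (eta' := eta / 4).
  assert (Hbad : forall k, exists S a, ncov m (Ak k) S /\ (forall N, psumS s S N <= a) /\ a < eps - eta).
  { intros k. apply NNPP. intros Hn. apply Hno. exists k. intros S a Hc Ha.
    apply Rnot_lt_le. intros Hlt. apply Hn. eauto. }
  assert (Hch : forall k, exists p : (nat -> option (list bool)) * R * R,
     ncov m (Ak k) (fst (fst p)) /\ (forall N, psumS s (fst (fst p)) N <= snd (fst p)) /\
     snd (fst p) < snd p + eta' * (/2)^(Datatypes.S k) /\ snd p < eps - eta /\
     (forall S a, ncov m (Ak k) S -> (forall N, psumS s S N <= a) -> snd p <= a)).
  { intros k. destruct (glb_exists s m (Ak k) (eps - eta) (Hbad k)) as [nu [H1 [H2 H3]]].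
    destruct (H3 (eta' * (/2)^(Datatypes.S k))) as [S [a [Ha1 [Ha2 Ha3]]]].
    { apply Rmult_lt_0_compat. unfold eta'; lra. apply hpow_pos. }
    exists (S, a, nu). simpl. auto. }
  assert (Hfun : exists (SS : nat -> nat -> option (list bool)) (bb nu : nat -> R), forall k,
     ncov m (Ak k) (SS k) /\ (forall N, psumS s (SS k) N <= bb k) /\
     bb k < nu k + eta' * (/2)^(Datatypes.S k) /\ nu k < eps - eta /\
     (forall S a, ncov m (Ak k) S -> (forall N, psumS s S N <= a) -> nu k <= a)).
  { exists (fun k => fst (fst (proj1_sig (constructive_indefinite_description _ (Hch k))))).
    exists (fun k => snd (fst (proj1_sig (constructive_indefinite_description _ (Hch k))))).
    exists (fun k => snd (proj1_sig (constructive_indefinite_description _ (Hch k)))).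
    intros k. destruct (constructive_indefinite_description _ (Hch k)) as [p Hp]. simpl. exact Hp. }
  clear Hch. destruct Hfun as [SS [bb [nu HP]]].
  set (rng := fun t => exists k i, SS k i = Some t).
  set (maximal := fun t => rng t /\ forall t', rng t' -> prefix t' t -> t' = t).
  set (kmin := fun t => least (fun k => exists i, SS k i = Some t)).
  set (imin := fun t => least (fun i => SS (kmin t) i = Some t)).
  set (T := fun j => match SS (pfst j) (psnd j) with
      | Some t => if excluded_middle_informative (maximal t /\ pfst j = kmin t /\ psnd j = imin t) then Some t else None
      | None => None end).
  assert (F1 : forall j t, T j = Some t -> maximal t /\ pfst j = kmin t /\ psnd j = imin t /\ SS (pfst j) (psnd j) = Some t).
  { intros j t E. unfold T in E. destruct (SS (pfst j) (psnd j)) eqn:E2; [|discriminate].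
    destruct (excluded_middle_informative _) as [Hm|]; [|discriminate]. injection E as <-. tauto. }
  assert (F2 : forall j j' t, T j = Some t -> T j' = Some t -> j = j').
  { intros j j' t E E'. apply F1 in E. apply F1 in E'.
    rewrite <- (cpair_fst_snd j), <- (cpair_fst_snd j'). f_equal; lia. }
  assert (F3 : forall t, maximal t -> SS (kmin t) (imin t) = Some t).
  { intros t [[k [i Hki]] _].
    assert (Hk : exists k, exists i, SS k i = Some t) by eauto.
    destruct (least_spec _ Hk) as [[i' Hi'] _]. fold (kmin t) in Hi'.
    destruct (least_spec (fun i => SS (kmin t) i = Some t) ltac:(eauto)) as [H _]. exact H. }
  assert (F5 : forall t t' sg, maximal t -> maximal t' -> prefix t sg -> prefix t' sg -> t = t').
  { intros t t' sg [Ht1 Ht2] [Ht1' Ht2'] H1 H2.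
    destruct (prefix_comparable t t' sg H1 H2) as [P|P].
    - apply Ht2'; auto.
    - symmetry. apply Ht2; auto. }
  assert (Hcov : ncov m A T).
  { split.
    - intros j t E. apply F1 in E. destruct E as [_ [_ [_ E]]]. destruct (HP (pfst j)) as [[Hc _] _]. eapply Hc; eauto.
    - intros x Hx. destruct (HA x Hx) as [k Hk]. destruct (HP k) as [[_ Hc] _].
      destruct (Hc x Hk) as [i [sg [E1 E2]]].
      assert (Hex : exists L, rng (pre x L)).
      { exists (length sg). rewrite <- (cyl_eq sg x E2). exists k, i. auto. }
      destruct (least_spec _ Hex) as [HL1 HL2].
      set (L := least (fun L => rng (pre x L))) in *.
      assert (Hmax : maximal (pre x L)).
      { split; auto. intros t' Hr Hp. destruct Hp as [Hp1 Hp2].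
        rewrite length_pre in Hp1.
        assert (Et' : t' = pre x (length t')).
        { pose proof (firstn_pre x L (length t') Hp1) as E. rewrite Hp2 in E. exact E. }
        rewrite Et' in Hr. apply HL2 in Hr.
        rewrite Et'. f_equal. lia. }
      exists (cpair (kmin (pre x L)) (imin (pre x L))), (pre x L). split; [|apply cyl_pre].
      unfold T. rewrite pfst_cpair, psnd_cpair, F3 by auto.
      destruct (excluded_middle_informative _) as [|Hn]; auto. exfalso. apply Hn. auto. }
  assert (Hbound : forall N, psumS s T N <= eps - eta + 2 * eta').
  { intros N. rewrite <- Lof_sum.
    set (L := Lof T N).
    assert (HLin : forall t, In t L -> maximal t /\ (kmin t < N)%nat).
    { intros t Ht. apply Lof_in in Ht. destruct Ht as [j [Hj1 Hj2]]. apply F1 in Hj2.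
      destruct Hj2 as [Hm [Hk _]]. split; auto. pose proof (cpair_ge_l (pfst j) (psnd j)).
      rewrite cpair_fst_snd in H. lia. }
    assert (HLnd : NoDup L) by (apply Lof_nodup; exact F2).
    rewrite (lsum_partition s L kmin N) by (intros t Ht; apply HLin in Ht; lia).
    set (Lk := fun k => filter (fun t => Nat.eqb (kmin t) k) L).
    set (extk := fun k (o : option (list bool)) => match o with
        | Some sg => if excluded_middle_informative (exists t, In t (Lk k) /\ prefix t sg) then true else false
        | None => false end).
    assert (Hcomb : sum_f_R0 (fun k => lsum s (Lk k) - (bb k - nu k)) N <= bb N).
    { apply (comb N (fun k N' => psumP s (extk k) (SS N) N')).
      - intros k N1 N2 H. apply psumP_mono; auto.
      - intros k Hk beta Hbeta.
        destruct (HP k) as [Hc1 [Hb1 [_ [_ Hnu1]]]].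
        assert (lsum s (Lk k) <= bb k - nu k + beta).
        { apply (local_opt s m (Ak k) (SS k) (fun i => if extk k (SS N i) then SS N i else None) (bb k) (nu k) beta (Lk k)); auto.
          - apply NoDup_filter. auto.
          - intros t Ht. unfold Lk in Ht. apply filter_In in Ht. destruct Ht as [Ht Hkt].
            apply Nat.eqb_eq in Hkt. apply HLin in Ht. destruct Ht as [Hm _]. exists (imin t).
            rewrite <- Hkt. apply F3. auto.
          - intros i sg E. destruct (extk k (SS N i)); [|discriminate].
            destruct (HP N) as [[Hc _] _]. eapply Hc; eauto.
          - intros x Hx [t [Ht Hcx]].
            assert (HxN : Ak N x).
            { apply (mono_Ak Ak Hmono k N x); auto. }
            destruct (HP N) as [[_ HcN] _]. destruct (HcN x HxN) as [i [sg [E1 E2]]].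
            exists i, sg. split; auto. rewrite E1. unfold extk.
            destruct (excluded_middle_informative _) as [|Hn]; auto. exfalso.
            pose proof Ht as Htk. unfold Lk in Ht. apply filter_In in Ht. destruct Ht as [Ht0 _].
            destruct (HLin t Ht0) as [[Hr Hmx] _].
            destruct (Nat.le_gt_cases (length t) (length sg)) as [Hl|Hl].
            + apply Hn. exists t. split; [exact Htk|]. apply (cyl_prefix t sg x); auto.
            + assert (Hp : prefix sg t) by (apply (cyl_prefix sg t x); auto; lia).
              assert (sg = t) by (apply Hmx; auto; exists N, i; auto). subst. lia.
          - intros N'. rewrite psumS_restrict. apply Hbeta. }
        lra.
      - intros N'. eapply Rle_trans. apply sum_disj.
        + intros k k' o Hk Hk' E E'. unfold extk in E, E'. destruct o as [sg|]; [|discriminate].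
          destruct (excluded_middle_informative _) as [[t [Ht Hpt]]|]; [|discriminate].
          destruct (excluded_middle_informative _) as [[t' [Ht' Hpt']]|]; [|discriminate].
          unfold Lk in Ht, Ht'. apply filter_In in Ht. apply filter_In in Ht'.
          destruct Ht as [Ht Hk1]. destruct Ht' as [Ht' Hk2]. apply Nat.eqb_eq in Hk1, Hk2.
          assert (t = t') by (apply (F5 t t' sg); auto; [apply HLin; auto|apply HLin; auto]).
          subst. lia.
        + destruct (HP N) as [_ [Hb _]]. apply Hb. }
    rewrite minus_sum in Hcomb.
    assert (Hsl : sum_f_R0 (fun k => bb k - nu k) N <= eta').
    { apply Rle_trans with (sum_f_R0 (fun k => (/2)^(Datatypes.S k) * eta') N).
      - apply sum_Rle. intros k Hk. destruct (HP k) as [_ [_ [H _]]]. lra.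
      - rewrite <- scal_sum, geom_sum. pose proof (hpow_pos (Datatypes.S N)). unfold eta'. nra. }
    destruct (HP N) as [_ [_ [H1 [H2 _]]]].
    pose proof (hpow_le 0 (Datatypes.S N) ltac:(lia)). rewrite pow_O in H.
    assert (eta' * (/2)^(Datatypes.S N) <= eta') by (unfold eta' in *; nra).
    unfold Lk in Hcomb. lra. }
  specialize (HNet T (eps - eta + 2 * eta') Hcov Hbound). unfold eta' in HNet. lra.
Qed.

Definition Eset (Rel : list bool -> list nat -> Prop) (tau : list nat) (x : cantor) : Prop :=
  exists g : baire, (forall i, (i < length tau)%nat -> (g i <= nth i tau 0)%nat) /\ forall n, Rel (pre x n) (pre g n).

Definition cc (eps : R) (n : nat) : R := eps * (1 + (/2)^n) / 2.

Lemma Eset_step s m eps Rel tau : 0 < s -> 0 < eps -> Net s m (cc eps (length tau)) (Eset Rel tau) ->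
  exists j, Net s m (cc eps (Datatypes.S (length tau))) (Eset Rel (tau ++ [j])).
Proof.
  intros Hs He H.
  destruct (increasing_Net s m (cc eps (length tau)) (Eset Rel tau) (fun j => Eset Rel (tau ++ [j])) Hs) with
     (eta := eps * (/2)^(Datatypes.S (length tau)) / 2) as [j Hj]; auto.
  - intros k x [g [Hg1 Hg2]]. exists g. split; auto. intros i Hi.
    rewrite length_app in Hi. simpl in Hi. specialize (Hg1 i ltac:(rewrite length_app; simpl; lia)).
    destruct (Nat.eq_dec i (length tau)).
    + subst. rewrite app_nth2 in * by lia. rewrite Nat.sub_diag in *. simpl in *. lia.
    + rewrite app_nth1 in * by lia. auto.
  - intros x [g [Hg1 Hg2]]. exists (g (length tau)). exists g. split; auto.
    intros i Hi. rewrite length_app in Hi. simpl in Hi.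
    destruct (Nat.eq_dec i (length tau)).
    + subst. rewrite app_nth2 by lia. rewrite Nat.sub_diag. simpl. lia.
    + rewrite app_nth1 by lia. apply Hg1. lia.
  - pose proof (hpow_pos (Datatypes.S (length tau))). apply Rmult_lt_0_compat; [|lra]. nra.
  - exists j. eapply Net_weaken. exact Hj. unfold cc. simpl. lra.
Qed.

Definition nextj s m eps Rel (tau : list nat) : nat :=
  match excluded_middle_informative (exists j, Net s m (cc eps (Datatypes.S (length tau))) (Eset Rel (tau ++ [j]))) with
  | left H => proj1_sig (constructive_indefinite_description _ H)
  | right _ => 0%nat
  end.

Fixpoint rseq s m eps Rel (n : nat) : list nat :=
  match n with O => [] | Datatypes.S n => rseq s m eps Rel n ++ [nextj s m eps Rel (rseq s m eps Rel n)] end.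

Lemma rseq_len s m eps Rel n : length (rseq s m eps Rel n) = n.
Proof. induction n; simpl; auto. rewrite length_app, IHn. simpl. lia. Qed.

Lemma rseq_net s m eps Rel n : 0 < s -> 0 < eps -> Net s m eps (Eset Rel []) ->
  Net s m (cc eps n) (Eset Rel (rseq s m eps Rel n)).
Proof.
  intros Hs He H0. induction n.
  - simpl. eapply Net_weaken. exact H0. unfold cc. simpl. lra.
  - simpl. unfold nextj. destruct (excluded_middle_informative _) as [He'|Hn].
    + destruct (constructive_indefinite_description _ He') as [j Hj]. simpl.
      rewrite rseq_len in Hj. exact Hj.
    + exfalso. apply Hn. apply Eset_step; auto. rewrite rseq_len. auto.
Qed.

Lemma rseq_pre s m eps Rel k k' : (k <= k')%nat -> firstn k (rseq s m eps Rel k') = rseq s m eps Rel k.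
Proof.
  induction 1. rewrite <- (rseq_len s m eps Rel k) at 1. apply firstn_all.
  simpl. rewrite firstn_app, IHle, rseq_len. replace (k - m0)%nat with 0%nat by lia. simpl. apply app_nil_r.
Qed.

Lemma rseq_is_pre s m eps Rel p : pre (fun i => nth i (rseq s m eps Rel (Datatypes.S i)) 0%nat) p = rseq s m eps Rel p.
Proof.
  apply nth_ext with (d := 0%nat) (d' := 0%nat).
  - rewrite length_pre, rseq_len. auto.
  - intros i Hi. rewrite length_pre in Hi. rewrite nth_pre by auto.
    rewrite <- (rseq_pre s m eps Rel (Datatypes.S i) p) by lia. rewrite nth_firstn.
    destruct (Nat.ltb_spec i (Datatypes.S i)); auto. lia.
Qed.

Lemma compact_step s m e Rel (r : baire) :
  (forall n, Net s m e (Eset Rel (pre r n))) -> Net s m e (Cf Rel r).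
Proof.
  intros H S a [Hc1 Hc2] Ha.
  assert (Hex : exists n, forall x, Eset Rel (pre r n) x -> exists i sg, S i = Some sg /\ cyl sg x).
  { apply NNPP. intros Hn.
    assert (Hx : forall n, exists x, Eset Rel (pre r n) x /\ ~ exists i sg, S i = Some sg /\ cyl sg x).
    { intros n. apply NNPP. intros Hn2. apply Hn. exists n. intros x Hx. apply NNPP. intros Hc. apply Hn2. eauto. }
    assert (Hxg : forall n, exists p : cantor * baire, (forall i, (i < n)%nat -> (snd p i <= r i)%nat) /\
         (forall k, Rel (pre (fst p) k) (pre (snd p) k)) /\ ~ exists i sg, S i = Some sg /\ cyl sg (fst p)).
    { intros n. destruct (Hx n) as [x [[g [Hg1 Hg2]] Hnc]]. exists (x, g). simpl. split; auto.
      intros i Hi. specialize (Hg1 i). rewrite length_pre in Hg1. rewrite nth_pre in Hg1 by auto. auto. }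
    set (xs := fun n => fst (proj1_sig (constructive_indefinite_description _ (Hxg n)))).
    set (gs := fun n => snd (proj1_sig (constructive_indefinite_description _ (Hxg n)))).
    assert (Hp : forall n, (forall i, (i < n)%nat -> (gs n i <= r i)%nat) /\
         (forall k, Rel (pre (xs n) k) (pre (gs n) k)) /\ ~ exists i sg, S i = Some sg /\ cyl sg (xs n)).
    { intros n. unfold xs, gs. destruct (constructive_indefinite_description _ (Hxg n)) as [p Hpp]. exact Hpp. }
    destruct (klim Rel r xs gs) as [x [g [Hg1 [Hg2 Hg3]]]].
    { intros n i Hi. apply (proj1 (Hp n)). auto. }
    { intros n k _. apply (proj1 (proj2 (Hp n))). }
    assert (Hcf : Cf Rel r x) by (exists g; auto).
    destruct (Hc2 x Hcf) as [i [sg [E1 E2]]].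
    destruct (Hg3 (length sg) 0%nat) as [n [_ Hn']].
    apply (proj2 (proj2 (Hp n))). exists i, sg. split; auto. unfold cyl in *. rewrite Hn'. auto. }
  destruct Hex as [n Hn]. apply (H n S a); auto. split; auto.
Qed.

Theorem mainTheorem3 (s : R) (Rel : list bool -> list nat -> Prop) :
  0 < s ->
  recursive_pred Rel ->
  Hs_pos s (Sig11 Rel) ->
  exists r : baire, forall f : baire,
    (forall n, (r n <= f n)%nat) ->
    Pi01 f (Cf Rel f) /\
    (forall x, Cf Rel f x -> Sig11 Rel x) /\
    Hs_pos s (Cf Rel f).
Proof.
  intros Hs HR [delta [eps [Hd [He HH]]]].
  destruct (pow_lt_1_zero (/2) ltac:(rewrite Rabs_right; lra) delta Hd) as [m Hm].
  specialize (Hm m (le_n m)). rewrite Rabs_right in Hm by (apply Rle_ge, Rlt_le, hpow_pos).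
  assert (HN0 : Net s m eps (Sig11 Rel)) by (apply (Hs_to_Net s delta); auto; lra).
  assert (HN1 : Net s m eps (Eset Rel [])).
  { apply (Net_mono s m eps (Sig11 Rel)); auto. intros x [g Hg]. exists g. split; auto. intros i Hi. simpl in Hi. lia. }
  set (r := fun i => nth i (rseq s m eps Rel (Datatypes.S i)) 0%nat).
  assert (Hr : forall n, Net s m (eps / 2) (Eset Rel (pre r n))).
  { intros n. unfold r. rewrite rseq_is_pre. eapply Net_weaken. apply rseq_net; auto.
    unfold cc. pose proof (hpow_pos n). nra. }
  assert (HC : Net s m (eps / 2) (Cf Rel r)) by (apply compact_step; auto).
  exists r. intros f Hf. split; [|split].
  - apply Pi01_Cf. auto.
  - intros x [g [_ Hg]]. exists g. auto.
  - exists ((/2)^m), (eps / 2). split; [apply hpow_pos|]. split; [lra|].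
    apply Net_to_Hs; auto. apply (Net_mono s m (eps/2) (Cf Rel r)); auto.
    intros x [g [Hg1 Hg2]]. exists g. split; auto. intros n. specialize (Hg1 n). specialize (Hf n). lia.
Qed.
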